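(* Assume (A1). Let $f_*\in\mathcal H_K$, let $\theta\in(0,1)$ with $\theta>\frac{q}{q+1}$, and let $\eta_t=\eta_1t^{-\theta}$ with $\eta_1$ satisfying (R1). Let $T\ge2$. Then $$\mathcal{E}_{\mathbf z}(f_T)-\mathcal{E}_{\mathbf z}(f_* )\le\Big(\frac{\|f_*\|_K^2}{2\eta_1}+c'_\theta\,\mathcal{E}_{\mathbf z}(f_* )+\widetilde C_1\Big)\Lambda_T+\frac{T^\theta}{2\eta_1}\sum_{k=1}^{T-1}\frac{1}{k+1}\Big[\frac1k\sum_{t=T-k+1}^T2\eta_t-2\eta_{T-k}\Big]\big\{\mathcal{E}_{\mathbf z}(f_{T-k})-\mathcal{E}_{\mathbf z}(f_* )\big\},$$ where $c'_\theta=\frac{1}{1-\theta}\Big(1+\max_{t\in\mathbb N}(2+\log4)(1+\log t)t^{-\theta}\Big)$ and $\widetilde C_1>0$ is a constant depending only on $q,\kappa,\theta,\eta_1,c_q$ (not on $T$, $m$, $\mathbf z$ or $f_*$).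
   Context: Setting. $X$ is a separable metric space, $Y\subseteq\mathbb{R}$, and $V:\mathbb{R}\times\mathbb{R}\to[0,\infty)$ is a measurable loss, convex in its second argument; $V'_-(y,a)$ denotes the left derivative of $a\mapsto V(y,a)$. A sample $\mathbf{z}=\{(x_i,y_i)\}_{i=1}^m\subset X\times Y$ is given, and $\mathcal{E}_{\mathbf z}(f)=\frac1m\sum_{i=1}^m V(y_i,f(x_i))$ is the empirical risk. $K:X\times X\to\mathbb{R}$ is a reproducing kernel with reproducing kernel Hilbert space $(\mathcal{H}_K,\|\cdot\|_K)$, $K_x=K(x,\cdot)$. Given step sizes $\eta_t>0$, the iterates are $f_1=0$ and $f_{t+1}=f_t-\eta_t\frac1m\sum_{j=1}^m V'_-(y_j,f_t(x_j))K_{x_j}$ for $t=1,\dots,T$. Assumption (A1) (parts used): $\kappa:=\sup_{x\in X}\sqrt{K(x,x)}<\infty$, $|V|_0:=\sup_{y\in Y}V(y,0)<\infty$, and there are $q\ge 0$, $c_q>0$ with $|V'_-(y,a)|\le c_q(1+|a|^q)$ for all $a\in\mathbb{R}$, $y\in Y$. Step-size condition (R1): $0<\eta_1\le\min\Big\{\frac{\sqrt{1-\theta}}{\sqrt2\,c_q(\kappa+1)^{q+1}},\ \frac{1-\theta}{4|V|_0}\Big\}$. Rate $\Lambda_T$: $\Lambda_T=T^{-(1-\theta)}$ if $\theta>\frac{q+1}{q+2}$; $\Lambda_T=(\log T)T^{-(1-\theta)}$ if $\theta=\frac{q+1}{q+2}$; $\Lambda_T=(\log T)T^{-(\theta(1+q)-q)}$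 if $\theta<\frac{q+1}{q+2}$. *)

(* Defs.v *)
From Stdlib Require Import Reals Lra Lia.
Open Scope R_scope.

(* A real inner-product space (pre-Hilbert space).  The RKHS H_K is an
   instance (with feature map x |-> K_x). *)
Record InnerSpace := {
  vcar :> Type;
  vzero : vcar;
  vadd : vcar -> vcar -> vcar;
  vopp : vcar -> vcar;
  vscal : R -> vcar -> vcar;
  inner : vcar -> vcar -> R;
  vadd_assoc : forall u v w, vadd u (vadd v w) = vadd (vadd u v) w;
  vadd_comm : forall u v, vadd u v = vadd v u;
  vadd_0 : forall u, vadd u vzero = u;
  vadd_opp : forall u, vadd u (vopp u) = vzero;
  vscal_assoc : forall a b u, vscal a (vscal b u) = vscal (a * b) u;
  vscal_1 : forall u, vscal 1 u = u;
  vscal_distr_v : forall a u v, vscal a (vadd u v) = vadd (vscal a u) (vscal a v);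
  vscal_distr_s : forall a b u, vscal (a + b) u = vadd (vscal a u) (vscal b u);
  inner_sym : forall u v, inner u v = inner v u;
  inner_add_l : forall u v w, inner (vadd u v) w = inner u w + inner v w;
  inner_scal_l : forall a u v, inner (vscal a u) v = a * inner u v;
  inner_pos : forall u, 0 <= inner u u;
  inner_def : forall u, inner u u = 0 -> u = vzero
}.

Arguments vzero {_}.
Arguments vadd {_}.
Arguments vopp {_}.
Arguments vscal {_}.
Arguments inner {_}.

Fixpoint sumR (n : nat) (F : nat -> R) : R :=
  match n with O => 0 | S n' => sumR n' F + F n' end.

Fixpoint vsum {H : InnerSpace} (n : nat) (F : nat -> H) : H :=
  match n with O => vzero | S n' => vadd (vsum n' F) (F n') end.

(* x^q for x >= 0 and real q >= 0, with 0^0 = 1 and 0^q = 0 for q > 0 *)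
Definition powr (x q : R) : R :=
  if Req_EM_T x 0 then (if Req_EM_T q 0 then 1 else 0) else Rpower x q.

Definition is_left_deriv (g : R -> R) (a l : R) : Prop :=
  forall eps, 0 < eps -> exists delta, 0 < delta /\
    forall h, 0 < h < delta -> Rabs ((g a - g (a - h)) / h - l) < eps.

(* evaluation f(x) = <f, K_x> (reproducing property) *)
Definition evalH {X : Type} {H : InnerSpace} (Kx : X -> H) (f : H) (x : X) : R :=
  inner f (Kx x).

Definition emp_risk {X : Type} {H : InnerSpace} (Kx : X -> H)
  (V : R -> R -> R) (m : nat) (xs : nat -> X) (ys : nat -> R) (f : H) : R :=
  / INR m * sumR m (fun i => V (ys i) (evalH Kx f (xs i))).

(* gradient-descent iterates: gd 1 = 0,
   gd (t+1) = gd t - eta t * (1/m) sum_j V'_-(y_j, (gd t)(x_j)) K_{x_j};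
   gd 0 := 0 is an unused dummy value. *)
Fixpoint gd {X : Type} {H : InnerSpace} (Kx : X -> H) (Vd : R -> R -> R)
  (m : nat) (xs : nat -> X) (ys : nat -> R) (eta : nat -> R) (t : nat) : H :=
  match t with
  | O => vzero
  | S t' =>
      match t' with
      | O => vzero
      | _ => let ft := gd Kx Vd m xs ys eta t' in
             vadd ft (vscal (- (eta t' * / INR m))
               (vsum m (fun j => vscal (Vd (ys j) (evalH Kx ft (xs j))) (Kx (xs j)))))
      end
  end.

Definition LambdaT (q theta : R) (T : nat) : R :=
  if Rlt_dec ((q + 1) / (q + 2)) theta then Rpower (INR T) (- (1 - theta))
  else if Req_EM_T theta ((q + 1) / (q + 2)) then ln (INR T) * Rpower (INR T) (- (1 - theta))
  else ln (INR T) * Rpower (INR T) (- (theta * (1 + q) - q)).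

(* the function t |-> (2 + log 4)(1 + log t) t^{-theta} whose max over t in N
   (t >= 1) enters c'_theta *)
Definition cth_fun (theta : R) (t : nat) : R :=
  (2 + ln 4) * (1 + ln (INR t)) * Rpower (INR t) (- theta).

(* Main.v *)
Require Import Defs.
From Stdlib Require Import Reals Lra Lia Psatz.
Open Scope R_scope.

Lemma sumR_ext : forall n F G, (forall i, (i < n)%nat -> F i = G i) -> sumR n F = sumR n G.
Proof. induction n; intros F G H; simpl; auto. rewrite (IHn F G); [rewrite H; auto|intros; apply H; lia]. Qed.

Lemma sumR_le : forall n F G, (forall i, (i < n)%nat -> F i <= G i) -> sumR n F <= sumR n G.
Proof. induction n; intros F G H; simpl; [lra|]. apply Rplus_le_compat; [apply IHn; intros; apply H; lia| apply H; lia]. Qed.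

Lemma sumR_scal : forall n c F, sumR n (fun i => c * F i) = c * sumR n F.
Proof. induction n; intros; simpl; [ring| rewrite IHn; ring]. Qed.

Lemma sumR_plus : forall n F G, sumR n (fun i => F i + G i) = sumR n F + sumR n G.
Proof. induction n; intros; simpl; [ring| rewrite IHn; ring]. Qed.

Lemma sumR_minus : forall n F G, sumR n (fun i => F i - G i) = sumR n F - sumR n G.
Proof. induction n; intros; simpl; [ring| rewrite IHn; ring]. Qed.

Lemma sumR_Sr : forall n F, sumR (S n) F = sumR n F + F n.
Proof. reflexivity. Qed.

Lemma sumR_shift : forall n F, sumR (S n) F = F 0%nat + sumR n (fun i => F (S i)).
Proof. induction n; intros; simpl in *; [ring|]. rewrite IHn. simpl. ring. Qed.

Lemma sumR_nonneg : forall n F, (forall i, (i < n)%nat -> 0 <= F i) -> 0 <= sumR n F.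
Proof. intros. replace 0 with (sumR n (fun _ => 0)). apply sumR_le; auto.
  clear; induction n; simpl; auto; rewrite IHn; ring. Qed.

Lemma sumR_const : forall n c, sumR n (fun _ => c) = INR n * c.
Proof. induction n; intros; simpl sumR; [simpl; ring|]. rewrite IHn, S_INR; ring. Qed.

Lemma sumR_rev : forall n F, sumR n (fun i => F (n - 1 - i)%nat) = sumR n F.
Proof.
  induction n; intros F; [reflexivity|].
  rewrite sumR_shift. simpl sumR at 2.
  replace (S n - 1 - 0)%nat with n by lia.
  rewrite <- IHn. rewrite Rplus_comm. f_equal. apply sumR_ext. intros; f_equal; lia.
Qed.

Lemma sumR_bound_max : forall n F c, (forall i, (i < n)%nat -> F i <= c) -> sumR n F <= INR n * c.
Proof. intros. rewrite <- sumR_const. apply sumR_le; auto. Qed.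

Section IS.
Variable H : InnerSpace.

Lemma inner_add_r : forall u v w : H, inner u (vadd v w) = inner u v + inner u w.
Proof. intros. rewrite inner_sym, inner_add_l, (inner_sym _ v u), (inner_sym _ w u). ring. Qed.

Lemma inner_scal_r : forall a (u v : H), inner u (vscal a v) = a * inner u v.
Proof. intros. rewrite inner_sym, inner_scal_l, inner_sym. ring. Qed.

Lemma inner_zero_l : forall v : H, inner vzero v = 0.
Proof. intros. assert (E := inner_add_l H vzero vzero v). rewrite vadd_0 in E. lra. Qed.

Lemma inner_zero_r : forall v : H, inner v vzero = 0.
Proof. intros. rewrite inner_sym. apply inner_zero_l. Qed.

Lemma inner_vsum_r : forall n (F : nat -> H) v, inner v (vsum n F) = sumR n (fun j => inner v (F j)).
Proof. induction n; intros; simpl. apply inner_zero_r. rewrite inner_add_r, IHn. auto. Qed.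

Lemma inner_expand : forall (u w : H), inner (vadd u w) (vadd u w) = inner u u + 2 * inner u w + inner w w.
Proof. intros. rewrite inner_add_l, !inner_add_r, (inner_sym _ w u). ring. Qed.

Lemma cauchy_schwarz : forall u v : H, (inner u v)^2 <= inner u u * inner v v.
Proof.
  intros u v.
  assert (Hv := inner_pos H v).
  destruct (Req_dec (inner v v) 0) as [E|E].
  - apply inner_def in E. rewrite E, !inner_zero_r. simpl. lra.
  - set (l := inner u v / inner v v).
    assert (P := inner_pos H (vadd u (vscal (- l) v))).
    rewrite inner_expand, inner_scal_r, inner_scal_l, inner_scal_r in P.
    unfold l in P. assert (0 < inner v v) by lra.
    apply Rmult_le_reg_r with (/ inner v v). apply Rinv_0_lt_compat; lra.
    replace (inner u u * inner v v * / inner v v) with (inner u u) by (field; lra).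
    replace (inner u v ^ 2 * / inner v v) with (inner u v * (inner u v / inner v v)) by (field; lra).
    replace (inner u u + 2 * (- (inner u v / inner v v) * inner u v) +
      - (inner u v / inner v v) * (- (inner u v / inner v v) * inner v v))
      with (inner u u - inner u v * (inner u v / inner v v)) in P by (field; lra).
    lra.
Qed.

Lemma two_inner_le : forall (u v : H) (n : R), 0 < n -> 2 * inner u v <= inner u u / n + n * inner v v.
Proof.
  intros u v n Hn.
  assert (P := inner_pos H (vadd u (vscal (- n) v))).
  rewrite inner_expand, inner_scal_r, inner_scal_l, inner_scal_r in P.
  apply Rmult_le_reg_l with n; auto.
  replace (n * (inner u u / n + n * inner v v)) with (inner u u + n*n*inner v v) by (field; lra).
  nra.
Qed.

Lemma vsum_norm : forall n (F : nat -> H),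
  inner (vsum n F) (vsum n F) <= INR n * sumR n (fun j => inner (F j) (F j)).
Proof.
  induction n; intros F; simpl vsum; simpl sumR.
  - rewrite inner_zero_l. simpl; lra.
  - rewrite inner_expand.
    destruct n.
    + simpl vsum. rewrite !inner_zero_l. simpl. lra.
    + assert (IH := IHn F).
      assert (Hn : 0 < INR (S n)) by (apply lt_0_INR; lia).
      assert (T := two_inner_le (vsum (S n) F) (F (S n)) (INR (S n)) Hn).
      assert (Hs : 0 <= sumR (S n) (fun j => inner (F j) (F j))) by (apply sumR_nonneg; intros; apply inner_pos).
      rewrite S_INR with (n := S n).
      set (A := inner (vsum (S n) F) (vsum (S n) F)) in *.
      set (Sm := sumR (S n) (fun j => inner (F j) (F j))) in *.
      assert (A / INR (S n) <= Sm).
      { apply Rmult_le_reg_l with (INR (S n)); auto.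
        replace (INR (S n) * (A / INR (S n))) with A by (field; lra). lra. }
      assert (0 <= inner (F (S n)) (F (S n))) by apply inner_pos.
      nra.
Qed.

End IS.
Definition convexR (g : R -> R) := forall a b l, 0 <= l <= 1 -> g (l * a + (1 - l) * b) <= l * g a + (1 - l) * g b.

Lemma subgrad_left : forall g a d, convexR g -> is_left_deriv g a d ->
  forall b, b < a -> g a - g b <= d * (a - b).
Proof.
  intros g a d Hc Hd b Hb.
  assert (Cl : forall h, 0 < h <= a - b -> (g a - g b) * h <= (g a - g (a - h)) * (a - b)).
  { intros h Hh. set (l := h / (a - b)).
    assert (Hl : 0 <= l <= 1).
    { unfold l; split. apply Rmult_le_pos; [lra| left; apply Rinv_0_lt_compat; lra].
      apply Rmult_le_reg_r with (a - b); [lra|]. unfold Rdiv. rewrite Rmult_assoc, Rinv_l; lra. }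
    assert (E : l * b + (1 - l) * a = a - h) by (unfold l; field; lra).
    assert (C := Hc b a l Hl). rewrite E in C.
    assert (l * (a - b) = h) by (unfold l; field; lra).
    nra. }
  destruct (Rle_dec ((g a - g b) / (a - b)) d) as [Hle|Hgt].
  - apply Rmult_le_reg_r with (/ (a - b)). apply Rinv_0_lt_compat; lra.
    replace ((g a - g b) * / (a - b)) with ((g a - g b) / (a - b)) by reflexivity.
    replace (d * (a - b) * / (a - b)) with d by (field; lra). auto.
  - exfalso. set (s := (g a - g b) / (a - b)) in *.
    destruct (Hd (s - d)) as [delta [Hdel Hh]]; [lra|].
    set (h := Rmin (delta / 2) (a - b)).
    assert (H1 : 0 < h < delta).
    { unfold h. split. apply Rmin_glb_lt; lra. apply Rle_lt_trans with (delta/2); [apply Rmin_l| lra]. }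
    assert (H2 : h <= a - b) by (unfold h; apply Rmin_r).
    specialize (Hh h H1). specialize (Cl h (conj (proj1 H1) H2)).
    assert (Q : s * h <= g a - g (a - h)).
    { apply Rmult_le_reg_r with (a - b); [lra|].
      replace (s * h * (a - b)) with ((g a - g b) * h) by (unfold s; field; lra). lra. }
    assert (Q2 : s <= (g a - g (a - h)) / h).
    { apply Rmult_le_reg_r with h; [lra|]. replace ((g a - g (a - h)) / h * h) with (g a - g (a - h)) by (field; lra). lra. }
    apply Rabs_def2 in Hh. lra.
Qed.

Lemma subgrad_right : forall g a d, convexR g -> is_left_deriv g a d ->
  forall b, a < b -> d * (b - a) <= g b - g a.
Proof.
  intros g a d Hc Hd b Hb.
  assert (Cl : forall h, 0 < h -> (g a - g (a - h)) * (b - a) <= (g b - g a) * h).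
  { intros h Hh. set (l := (b - a) / (b - a + h)).
    assert (Hl : 0 <= l <= 1).
    { unfold l; split. apply Rmult_le_pos; [lra| left; apply Rinv_0_lt_compat; lra].
      apply Rmult_le_reg_r with (b - a + h); [lra|]. unfold Rdiv. rewrite Rmult_assoc, Rinv_l; lra. }
    assert (E : l * (a - h) + (1 - l) * b = a) by (unfold l; field; lra).
    assert (C := Hc (a - h) b l Hl). rewrite E in C.
    assert (E1 : l * (b - a + h) = b - a) by (unfold l; field; lra).
    assert (E2 : (1 - l) * (b - a + h) = h) by (unfold l; field; lra).
    assert (C2 : g a * (b - a + h) <= l * (b - a + h) * g (a - h) + (1 - l) * (b - a + h) * g b).
    { replace (l * (b - a + h) * g (a - h) + (1 - l) * (b - a + h) * g b) with ((l * g (a - h) + (1 - l) * g b) * (b - a + h)) by ring.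
      apply Rmult_le_compat_r; lra. }
    rewrite E1, E2 in C2. nra. }
  destruct (Rle_dec d ((g b - g a) / (b - a))) as [Hle|Hgt].
  - apply Rmult_le_reg_r with (/ (b - a)). apply Rinv_0_lt_compat; lra.
    replace (d * (b - a) * / (b - a)) with d by (field; lra). auto.
  - exfalso. set (s := (g b - g a) / (b - a)) in *.
    destruct (Hd (d - s)) as [delta [Hdel Hh]]; [lra|].
    set (h := delta / 2).
    assert (H1 : 0 < h < delta) by (unfold h; lra).
    specialize (Hh h H1). specialize (Cl h (proj1 H1)).
    assert (Q2 : (g a - g (a - h)) / h <= s).
    { apply Rmult_le_reg_r with (h * (b - a)); [nra|].
      replace ((g a - g (a - h)) / h * (h * (b - a))) with ((g a - g (a - h)) * (b - a)) by (field; lra).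
      replace (s * (h * (b - a))) with ((g b - g a) * h) by (unfold s; field; lra). lra. }
    apply Rabs_def2 in Hh. lra.
Qed.

Lemma subgrad : forall g a d, convexR g -> is_left_deriv g a d ->
  forall b, g a + d * (b - a) <= g b.
Proof.
  intros g a d Hc Hd b.
  destruct (Rtotal_order b a) as [H|[H|H]].
  - assert (X := subgrad_left g a d Hc Hd b H). lra.
  - subst. lra.
  - assert (X := subgrad_right g a d Hc Hd b H). lra.
Qed.
Section GD.
Variable X : Type.
Variable H : InnerSpace.
Variable Kx : X -> H.
Variable V Vd : R -> R -> R.
Variable m : nat.
Variable xs : nat -> X.
Variable ys : nat -> R.
Variable eta : nat -> R.

Definition fI (t : nat) : H := gd Kx Vd m xs ys eta t.
Definition dI (t j : nat) : R := Vd (ys j) (evalH Kx (fI t) (xs j)).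
Definition aI (t j : nat) : R := evalH Kx (fI t) (xs j).
Definition SI (t : nat) : H := vsum m (fun j => vscal (dI t j) (Kx (xs j))).
Definition wI (t : nat) : H := vscal (- (eta t * / INR m)) (SI t).
Definition EI (g : H) : R := emp_risk Kx V m xs ys g.
Definition DistI (g u : H) : R := inner u u - 2 * inner u g + inner g g.

Lemma gd_one : fI 1 = vzero.
Proof. reflexivity. Qed.

Lemma gd_succ : forall t, (1 <= t)%nat -> fI (S t) = vadd (fI t) (wI t).
Proof. intros t Ht. destruct t as [|t]; [lia|]. reflexivity. Qed.

Lemma inner_S : forall t g, inner g (SI t) = sumR m (fun j => dI t j * evalH Kx g (xs j)).
Proof. intros. unfold SI. rewrite inner_vsum_r. apply sumR_ext. intros. rewrite inner_scal_r. reflexivity. Qed.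

Lemma inner_w : forall t g, inner g (wI t) = - (eta t * / INR m) * sumR m (fun j => dI t j * evalH Kx g (xs j)).
Proof. intros. unfold wI. rewrite inner_scal_r, inner_S. auto. Qed.

Lemma Dist_step : forall t g, (1 <= t)%nat -> (1 <= m)%nat -> 0 <= eta t ->
  (forall y, convexR (V y)) -> (forall y a, is_left_deriv (V y) a (Vd y a)) ->
  DistI g (fI (S t)) <= DistI g (fI t) + 2 * eta t * (EI g - EI (fI t)) + inner (wI t) (wI t).
Proof.
  intros t g Ht Hm He Hc Hd. unfold DistI. rewrite (gd_succ t Ht).
  rewrite inner_expand, inner_add_l.
  rewrite (inner_sym _ (wI t) g), (inner_sym _ (fI t) (wI t)).
  rewrite (inner_sym _ (wI t) (fI t)).
  rewrite !inner_w.
  assert (Sub : forall j, V (ys j) (aI t j) - V (ys j) (evalH Kx g (xs j)) <= dI t j * (aI t j - evalH Kx g (xs j))).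
  { intros j. assert (X1 := subgrad (V (ys j)) (aI t j) (dI t j) (Hc _) (Hd _ _) (evalH Kx g (xs j))). unfold aI, dI in *. lra. }
  assert (Sm := sumR_le m _ _ (fun j _ => Sub j)).
  rewrite sumR_minus in Sm.
  assert (Hmp : 0 < INR m) by (apply lt_0_INR; lia).
  unfold EI, emp_risk.
  assert (E2 : sumR m (fun j => dI t j * (aI t j - evalH Kx g (xs j))) =
     sumR m (fun j => dI t j * evalH Kx (fI t) (xs j)) - sumR m (fun j => dI t j * evalH Kx g (xs j))).
  { rewrite <- sumR_minus. apply sumR_ext. intros. unfold aI. ring. }
  rewrite E2 in Sm.
  set (A := sumR m (fun j => dI t j * evalH Kx (fI t) (xs j))) in *.
  set (B := sumR m (fun j => dI t j * evalH Kx g (xs j))) in *.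
  set (Vf := sumR m (fun i => V (ys i) (evalH Kx (fI t) (xs i)))).
  set (Vg := sumR m (fun i => V (ys i) (evalH Kx g (xs i)))).
  assert (Ev : sumR m (fun j => V (ys j) (aI t j)) = Vf) by reflexivity.
  rewrite Ev in Sm. fold Vg in Sm.
  assert (Key : - (eta t * / INR m) * A - (- (eta t * / INR m) * B) <= eta t * (/ INR m * Vg - / INR m * Vf)).
  { assert (0 <= eta t * / INR m) by (apply Rmult_le_pos; [lra| left; apply Rinv_0_lt_compat; lra]).
    replace (eta t * (/ INR m * Vg - / INR m * Vf)) with (- (eta t * / INR m) * (Vf - Vg)) by ring.
    replace (- (eta t * / INR m) * A - - (eta t * / INR m) * B) with (- (eta t * / INR m) * (A - B)) by ring.
    nra. }
  lra.
Qed.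

Lemma norm_step : forall t, (1 <= t)%nat ->
  inner (fI (S t)) (fI (S t)) = inner (fI t) (fI t) + 2 * (- (eta t * / INR m) * sumR m (fun j => dI t j * aI t j)) + inner (wI t) (wI t).
Proof.
  intros t Ht. rewrite (gd_succ t Ht), inner_expand, inner_w. reflexivity.
Qed.

Lemma w_norm : forall t kappa, (1 <= m)%nat -> (forall x, inner (Kx x) (Kx x) <= kappa ^ 2) ->
  inner (wI t) (wI t) <= (eta t) ^ 2 * kappa ^ 2 * / INR m * sumR m (fun j => (dI t j) ^ 2).
Proof.
  intros t kappa Hm HK. unfold wI. rewrite inner_scal_l, inner_scal_r.
  assert (Hmp : 0 < INR m) by (apply lt_0_INR; lia).
  assert (N := vsum_norm H m (fun j => vscal (dI t j) (Kx (xs j)))).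
  fold (SI t) in N.
  assert (N2 : sumR m (fun j => inner (vscal (dI t j) (Kx (xs j))) (vscal (dI t j) (Kx (xs j))))
     <= kappa ^ 2 * sumR m (fun j => dI t j ^ 2)).
  { rewrite <- sumR_scal. apply sumR_le. intros. rewrite inner_scal_l, inner_scal_r.
    specialize (HK (xs i)). assert (0 <= dI t i ^ 2) by nra. nra. }
  assert (P : 0 <= sumR m (fun j => inner (vscal (dI t j) (Kx (xs j))) (vscal (dI t j) (Kx (xs j))))) by (apply sumR_nonneg; intros; apply inner_pos).
  set (c := eta t * / INR m).
  replace (- c * (- c * inner (SI t) (SI t))) with (c^2 * inner (SI t) (SI t)) by ring.
  assert (c ^ 2 * inner (SI t) (SI t) <= c^2 * (INR m * (kappa ^ 2 * sumR m (fun j => dI t j ^ 2)))).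
  { apply Rmult_le_compat_l; [nra|]. apply Rle_trans with (1 := N). apply Rmult_le_compat_l; lra. }
  replace (eta t ^ 2 * kappa ^ 2 * / INR m * sumR m (fun j => dI t j ^ 2)) with (c^2 * (INR m * (kappa ^ 2 * sumR m (fun j => dI t j ^ 2)))).
  lra. unfold c. field. lra.
Qed.

End GD.
Lemma Rpower_pos : forall x y, 0 < Rpower x y.
Proof. intros. unfold Rpower. apply exp_pos. Qed.

Lemma Rpower_1_base : forall y, Rpower 1 y = 1.
Proof. intros. unfold Rpower. rewrite ln_1, Rmult_0_r. apply exp_0. Qed.

Lemma ln_le_minus1 : forall x, 0 < x -> ln x <= x - 1.
Proof. intros. assert (E := exp_ineq1_le (ln x)). rewrite exp_ln in E; lra. Qed.

Lemma exp_convex : forall p u v, 0 <= p <= 1 -> exp (p * u + (1 - p) * v) <= p * exp u + (1 - p) * exp v.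
Proof.
  intros p u v Hp. set (w := p * u + (1 - p) * v).
  assert (Eu : exp u = exp w * exp (u - w)) by (rewrite <- exp_plus; f_equal; ring).
  assert (Ev : exp v = exp w * exp (v - w)) by (rewrite <- exp_plus; f_equal; ring).
  assert (A := exp_ineq1_le (u - w)). assert (B := exp_ineq1_le (v - w)).
  assert (Pw := exp_pos w).
  rewrite Eu, Ev.
  assert (p * (exp w * exp (u - w)) >= p * (exp w * (1 + (u - w)))).
  { apply Rle_ge. apply Rmult_le_compat_l; [lra|]. apply Rmult_le_compat_l; lra. }
  assert ((1-p) * (exp w * exp (v - w)) >= (1-p) * (exp w * (1 + (v - w)))).
  { apply Rle_ge. apply Rmult_le_compat_l; [lra|]. apply Rmult_le_compat_l; lra. }
  assert (p * (exp w * (1 + (u - w))) + (1-p) * (exp w * (1 + (v - w))) = exp w) by (unfold w; ring).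
  lra.
Qed.

Lemma bern_concave : forall r p, 0 < r -> 0 <= p <= 1 -> Rpower r p <= 1 + p * (r - 1).
Proof.
  intros r p Hr Hp. unfold Rpower.
  replace (p * ln r) with (p * ln r + (1 - p) * 0) by ring.
  eapply Rle_trans. apply exp_convex; auto.
  rewrite exp_ln, exp_0 by auto. lra.
Qed.

Lemma bern_convex_neg : forall r p, 0 < r -> p <= 0 -> 1 + p * (r - 1) <= Rpower r p.
Proof.
  intros r p Hr Hp. unfold Rpower.
  assert (A := exp_ineq1_le (p * ln r)). assert (B := ln_le_minus1 r Hr).
  assert (p * (r - 1) <= p * ln r) by nra. lra.
Qed.

Lemma ln_le_pow : forall T e, 0 < T -> 0 < e -> ln T <= Rpower T e / e.
Proof.
  intros T e HT He. assert (A := ln_le_minus1 (Rpower T e) (Rpower_pos _ _)).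
  rewrite ln_Rpower in A.
  apply Rmult_le_reg_l with e; auto. replace (e * (Rpower T e / e)) with (Rpower T e) by (field; lra). lra.
Qed.

Lemma Rpower_INR_pos : forall n : nat, (1 <= n)%nat -> 0 < INR n.
Proof. intros. apply lt_0_INR. lia. Qed.

Lemma Rpower_mono_exp : forall x a b, 1 <= x -> a <= b -> Rpower x a <= Rpower x b.
Proof. intros. apply Rle_Rpower; auto. Qed.

Lemma Rpower_mono_base : forall x y c, 0 < x <= y -> 0 <= c -> Rpower x c <= Rpower y c.
Proof. intros. apply Rle_Rpower_l; auto. Qed.

Lemma Rpower_ge1 : forall x c, 1 <= x -> 0 <= c -> 1 <= Rpower x c.
Proof. intros. rewrite <- (Rpower_O x) by lra. apply Rle_Rpower; auto. Qed.

Lemma Rpower_le1 : forall x c, 1 <= x -> c <= 0 -> Rpower x c <= 1.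
Proof. intros. rewrite <- (Rpower_O x) by lra. apply Rle_Rpower; auto. Qed.

Lemma Rpower_opp_mul : forall x a, 0 < x -> Rpower x a * Rpower x (- a) = 1.
Proof. intros. rewrite <- Rpower_plus. replace (a + - a) with 0 by ring. apply Rpower_O; auto. Qed.

Lemma sum_pow_theta : forall th n, 0 < th < 1 -> (1 <= n)%nat ->
  (1 - th) * sumR n (fun j => Rpower (INR (S j)) (- th)) <= Rpower (INR n) (1 - th).
Proof.
  intros th n Hth Hn. induction n as [|n IH]; [lia|].
  destruct n as [|n].
  - simpl. rewrite Rpower_1_base. replace (INR 1) with 1 by reflexivity. rewrite Rpower_1_base. lra.
  - assert (IH' := IH ltac:(lia)). rewrite sumR_Sr.
    set (N := INR (S n)) in *. set (N1 := INR (S (S n))).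
    assert (HN : 1 <= N) by (unfold N; rewrite S_INR; assert (0 <= INR n) by apply pos_INR; lra).
    assert (HN1 : N1 = N + 1) by (unfold N1, N; rewrite (S_INR (S n)); auto).
    assert (Key : (1 - th) * Rpower N1 (- th) <= Rpower N1 (1 - th) - Rpower N (1 - th)).
    { set (r := N / N1).
      assert (Hr : 0 < r) by (unfold r; apply Rdiv_lt_0_compat; lra).
      assert (B := bern_concave r (1 - th) Hr ltac:(lra)).
      assert (E1 : Rpower N (1 - th) = Rpower r (1 - th) * Rpower N1 (1 - th)).
      { rewrite Rpower_mult_distr by lra. unfold r. f_equal. field. lra. }
      assert (E2 : Rpower N1 (- th) = Rpower N1 (1 - th) * / N1).
      { replace (- th) with ((1 - th) + Ropp 1) by ring. rewrite Rpower_plus, Rpower_Ropp, Rpower_1; lra. }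
      rewrite E1, E2.
      assert (P := Rpower_pos N1 (1 - th)).
      assert (r - 1 = - / N1) by (unfold r; rewrite HN1; field; lra).
      assert (0 < / N1) by (apply Rinv_0_lt_compat; lra).
      nra. }
    replace (S (S n) - 1)%nat with (S n) by lia. fold N1.
    assert (Rpower N (1 - th) <= Rpower N1 (1 - th)) by (apply Rpower_mono_base; lra).
    replace (INR (S (S n))) with N1 by reflexivity.
    rewrite Rmult_plus_distr_l. lra.
Qed.
Lemma Rpower_split_inv : forall s b, 0 < s -> Rpower s (- b) = Rpower s (1 - b) * / s.
Proof. intros. replace (- b) with ((1 - b) + Ropp 1) by ring. rewrite Rpower_plus, Rpower_Ropp, Rpower_1; lra. Qed.

Lemma INR_S_ge1 : forall n, 1 <= INR (S n).
Proof. intros. rewrite S_INR. assert (0 <= INR n) by apply pos_INR. lra. Qed.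

Lemma harmonic : forall n, (1 <= n)%nat -> sumR n (fun j => / INR (S j)) <= 1 + ln (INR n).
Proof.
  intros n Hn. induction n as [|n IH]; [lia|].
  destruct n as [|n].
  - simpl. replace (INR 1) with 1 by reflexivity. rewrite ln_1. lra.
  - assert (IH' := IH ltac:(lia)). rewrite sumR_Sr.
    set (N := INR (S n)) in *. set (N1 := INR (S (S n))).
    assert (HN : 1 <= N) by apply INR_S_ge1.
    assert (HN1 : N1 = N + 1) by (unfold N1, N; rewrite (S_INR (S n)); auto).
    assert (Key : / N1 <= ln N1 - ln N).
    { assert (L := ln_le_minus1 (N / N1) ltac:(apply Rdiv_lt_0_compat; lra)).
      unfold Rdiv in L. rewrite ln_mult, ln_Rinv in L by (try apply Rinv_0_lt_compat; lra).
      replace (N * / N1 - 1) with (- / N1) in L by (rewrite HN1; field; lra). lra. }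
    fold N1. lra.
Qed.

Lemma sum_pow_big : forall b n, 1 < b -> (1 <= n)%nat ->
  sumR n (fun j => Rpower (INR (S j)) (- b)) <= b / (b - 1).
Proof.
  intros b n Hb Hn.
  assert (G : sumR n (fun j => Rpower (INR (S j)) (- b)) <= 1 + (1 - Rpower (INR n) (1 - b)) / (b - 1)).
  { induction n as [|n IH]; [lia|].
    destruct n as [|n].
    - simpl. rewrite Rpower_1_base. replace (INR 1) with 1 by reflexivity. rewrite Rpower_1_base.
      replace ((1 - 1) / (b - 1)) with 0 by (field; lra). lra.
    - assert (IH' := IH ltac:(lia)). rewrite sumR_Sr.
      set (N := INR (S n)) in *. set (N1 := INR (S (S n))).
      assert (HN : 1 <= N) by apply INR_S_ge1.
      assert (HN1 : N1 = N + 1) by (unfold N1, N; rewrite (S_INR (S n)); auto).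
      assert (Key : (b - 1) * Rpower N1 (- b) <= Rpower N (1 - b) - Rpower N1 (1 - b)).
      { set (r := N / N1).
        assert (Hr : 0 < r) by (unfold r; apply Rdiv_lt_0_compat; lra).
        assert (B := bern_convex_neg r (1 - b) Hr ltac:(lra)).
        assert (E1 : Rpower N (1 - b) = Rpower r (1 - b) * Rpower N1 (1 - b)).
        { rewrite Rpower_mult_distr by lra. unfold r. f_equal. field. lra. }
        rewrite E1, (Rpower_split_inv N1 b) by lra.
        assert (P := Rpower_pos N1 (1 - b)).
        assert (r - 1 = - / N1) by (unfold r; rewrite HN1; field; lra).
        assert (0 < / N1) by (apply Rinv_0_lt_compat; lra).
        nra. }
      fold N1.
      assert (Rpower N1 (- b) <= (Rpower N (1 - b) - Rpower N1 (1 - b)) / (b - 1)).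
      { apply Rmult_le_reg_l with (b - 1); [lra|]. replace ((b - 1) * ((Rpower N (1 - b) - Rpower N1 (1 - b)) / (b - 1))) with (Rpower N (1 - b) - Rpower N1 (1 - b)) by (field; lra). lra. }
      assert (E : (1 - Rpower N (1 - b)) / (b - 1) + (Rpower N (1 - b) - Rpower N1 (1 - b)) / (b - 1) = (1 - Rpower N1 (1 - b)) / (b - 1)) by (field; lra).
      lra. }
  assert (0 <= Rpower (INR n) (1 - b) / (b - 1)).
  { apply Rmult_le_pos. left; apply Rpower_pos. left; apply Rinv_0_lt_compat; lra. }
  replace (b / (b - 1)) with (1 + 1 / (b - 1)) by (field; lra).
  replace ((1 - Rpower (INR n) (1 - b)) / (b - 1)) with (1 / (b - 1) - Rpower (INR n) (1 - b) / (b - 1)) in G by (field; lra).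
  lra.
Qed.

Lemma sum_pow_small : forall b n, b <= 1 -> (1 <= n)%nat ->
  sumR n (fun j => Rpower (INR (S j)) (- b)) <= Rpower (INR n) (1 - b) * sumR n (fun j => / INR (S j)).
Proof.
  intros b n Hb Hn. rewrite <- sumR_scal. apply sumR_le. intros i Hi.
  assert (H1 := INR_S_ge1 i).
  rewrite Rpower_split_inv by lra.
  apply Rmult_le_compat_r. left; apply Rinv_0_lt_compat; lra.
  apply Rpower_mono_base; [|lra]. split; [lra|]. apply le_INR. lia.
Qed.
Lemma telescope : forall (T : nat) (a e Q : nat -> R) (es F : R),
  (2 <= T)%nat ->
  (forall s, (1 <= s <= T)%nat ->
     sumR (T - s + 1) (fun j => a (s + j)%nat * (e (s + j)%nat - e s)) <= sumR (T - s + 1) (fun j => Q (s + j)%nat)) ->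
  sumR T (fun j => a (1 + j)%nat * (e (1 + j)%nat - es)) <= F + sumR T (fun j => Q (1 + j)%nat) ->
  a T * (e T - es) <= (F + sumR T (fun j => Q (1 + j)%nat)) / INR T
     + sumR (T - 1) (fun i => / (INR (S i) * INR (S i + 1)) * sumR (S i + 1) (fun j => Q (T - S i + j)%nat))
     + sumR (T - 1) (fun i => let k := S i in / INR (k + 1) * (/ INR k * sumR k (fun j => a (T - k + 1 + j)%nat) - a (T - k)%nat) * (e (T - k)%nat - es)).
Proof.
  intros T a e Q es F HT H1 H2.
  set (Aq := fun n : nat => sumR (S n) (fun j => a (T - n + j)%nat * (e (T - n + j)%nat - es))).
  set (Qp := fun i : nat => / (INR (S i) * INR (S i + 1)) * sumR (S i + 1) (fun j => Q (T - S i + j)%nat)).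
  set (Wp := fun i : nat => let k := S i in / INR (k + 1) * (/ INR k * sumR k (fun j => a (T - k + 1 + j)%nat) - a (T - k)%nat) * (e (T - k)%nat - es)).
  assert (Claim : forall n, (n <= T - 1)%nat -> a T * (e T - es) <= Aq n / INR (S n) + sumR n (fun i => Qp i + Wp i)).
  { induction n as [|n IH]; intros Hn.
    - unfold Aq. simpl. replace (T - 0 + 0)%nat with T by lia. replace (INR 1) with 1 by reflexivity. lra.
    - specialize (IH ltac:(lia)). rewrite sumR_Sr.
      set (k := S n).
      assert (Hk1 : 1 <= INR k) by apply INR_S_ge1.
      assert (Hkk : INR (S k) = INR k + 1) by apply S_INR.
      set (u0 := e (T - k)%nat - es). set (a0 := a (T - k)%nat).
      set (X := sumR k (fun j => a (T - k + 1 + j)%nat * (e (T - k + 1 + j)%nat - es))).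
      set (Y := sumR k (fun j => a (T - k + 1 + j)%nat * (e (T - k + 1 + j)%nat - e (T - k)%nat))).
      set (Sa := sumR k (fun j => a (T - k + 1 + j)%nat)).
      set (Qs := sumR (k + 1) (fun j => Q (T - k + j)%nat)).
      assert (EAn : Aq n = X).
      { unfold Aq, X. apply sumR_ext. intros j Hj. replace (T - n + j)%nat with (T - k + 1 + j)%nat by (unfold k in *; lia). reflexivity. }
      assert (EAk : Aq k = a0 * u0 + X).
      { unfold Aq. rewrite sumR_shift. replace (T - k + 0)%nat with (T - k)%nat by lia. f_equal.
        apply sumR_ext. intros j Hj. replace (T - k + S j)%nat with (T - k + 1 + j)%nat by lia. reflexivity. }
      assert (EXY : X = Y + Sa * u0).
      { unfold X, Y, Sa. rewrite (Rmult_comm (sumR k _) u0), <- sumR_scal, <- sumR_plus. apply sumR_ext. intros. unfold u0. ring. }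
      assert (HY : Y <= Qs).
      { specialize (H1 (T - k)%nat ltac:(unfold k in *; lia)).
        replace (T - (T - k) + 1)%nat with (S k) in H1 by (unfold k in *; lia).
        rewrite sumR_shift in H1.
        replace (T - k + 0)%nat with (T - k)%nat in H1 by lia.
        replace (e (T - k)%nat - e (T - k)%nat) with 0 in H1 by ring.
        unfold Qs. replace (k + 1)%nat with (S k) by lia.
        rewrite sumR_shift. rewrite sumR_shift in H1. replace (T - k + 0)%nat with (T - k)%nat in H1 |- * by lia.
        unfold Y.
        assert (E : sumR k (fun i => a (T - k + S i)%nat * (e (T - k + S i)%nat - e (T - k)%nat)) =
                    sumR k (fun j => a (T - k + 1 + j)%nat * (e (T - k + 1 + j)%nat - e (T - k)%nat))).
        { apply sumR_ext. intros. replace (T - k + S i)%nat with (T - k + 1 + i)%nat by lia. reflexivity. }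
        rewrite <- E. lra. }
      assert (EQp : Qp n = / (INR k * (INR k + 1)) * Qs).
      { unfold Qp, Qs. fold k. rewrite <- Hkk. replace (S k) with (k + 1)%nat by lia. reflexivity. }
      assert (EWp : Wp n = / (INR k + 1) * (/ INR k * Sa - a0) * u0).
      { unfold Wp. fold k. rewrite <- Hkk. replace (S k) with (k + 1)%nat by lia. reflexivity. }
      assert (Step : Aq n / INR k <= Aq k / INR (S k) + (Qp n + Wp n)).
      { rewrite EAn, EAk, EQp, EWp, Hkk, EXY.
        assert (Dk : 0 < INR k * (INR k + 1)) by nra.
        assert (R : (Y + Sa * u0) / INR k = (a0 * u0 + (Y + Sa * u0)) / (INR k + 1) + (/ (INR k * (INR k + 1)) * Y + / (INR k + 1) * (/ INR k * Sa - a0) * u0)) by (field; lra).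
        rewrite R.
        assert (/ (INR k * (INR k + 1)) * Y <= / (INR k * (INR k + 1)) * Qs).
        { apply Rmult_le_compat_l; [left; apply Rinv_0_lt_compat; lra| lra]. }
        lra. }
      fold k in IH. lra. }
  specialize (Claim (T - 1)%nat ltac:(lia)).
  replace (S (T - 1)) with T in Claim by lia.
  assert (EA : Aq (T - 1)%nat = sumR T (fun j => a (1 + j)%nat * (e (1 + j)%nat - es))).
  { unfold Aq. replace (S (T - 1)) with T by lia. apply sumR_ext. intros. replace (T - (T - 1) + i)%nat with (1 + i)%nat by lia. reflexivity. }
  rewrite EA in Claim.
  assert (HTp : 0 < INR T) by (apply lt_0_INR; lia).
  assert (sumR T (fun j => a (1 + j)%nat * (e (1 + j)%nat - es)) / INR T <= (F + sumR T (fun j => Q (1 + j)%nat)) / INR T).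
  { apply Rmult_le_compat_r; [left; apply Rinv_0_lt_compat; lra| auto]. }
  rewrite sumR_plus in Claim. fold Qp Wp. lra.
Qed.
Lemma powr_nonneg : forall x q, 0 <= powr x q.
Proof. intros. unfold powr. destruct (Req_EM_T x 0); [destruct (Req_EM_T q 0); lra|]. left; apply Rpower_pos. Qed.

Lemma powr_pos_eq : forall x q, 0 < x -> powr x q = Rpower x q.
Proof. intros. unfold powr. destruct (Req_EM_T x 0); [lra|auto]. Qed.

Lemma powr_le1 : forall x q, 0 <= x <= 1 -> 0 <= q -> powr x q <= 1.
Proof.
  intros x q Hx Hq. unfold powr. destruct (Req_EM_T x 0); [destruct (Req_EM_T q 0); lra|].
  rewrite <- (Rpower_1_base q). apply Rpower_mono_base; lra.
Qed.

Lemma Rpower_sq : forall x c, Rpower x c * Rpower x c = Rpower x (2 * c).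
Proof. intros. rewrite <- Rpower_plus. f_equal. ring. Qed.

Lemma Rpower_two : forall x, 0 < x -> Rpower x 2 = x ^ 2.
Proof. intros. replace 2 with (INR 2) by (simpl; ring). apply Rpower_pow; auto. Qed.

Lemma abs_le_from_sq : forall a M, 0 <= M -> a ^ 2 <= M ^ 2 -> Rabs a <= M.
Proof. intros a M HM Ha. destruct (Rle_dec (Rabs a) M) as [h|h]; auto.
  assert (E : Rabs a ^ 2 = a ^ 2) by apply pow2_abs. nra. Qed.

Section Params.
Variables q kappa th eta1 cq V0 : R.
Hypothesis hq : 0 <= q.
Hypothesis hcq : 0 < cq.
Hypothesis hk : 0 <= kappa.
Hypothesis hth : 0 < th < 1.
Hypothesis hqth : q / (q + 1) < th.
Hypothesis he1 : 0 < eta1.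
Hypothesis R1a : eta1 <= sqrt (1 - th) / (sqrt 2 * cq * Rpower (kappa + 1) (q + 1)).
Hypothesis R1b : 4 * V0 * eta1 <= 1 - th.

Definition Lc := eta1 * cq * Rpower (kappa + 1) (q + 1).
Definition Wc := Rpower (kappa + 1) (2 * (q + 1)).

Lemma qth : q * (1 - th) < th.
Proof.
  assert (0 < q + 1) by lra.
  apply Rmult_lt_compat_r with (r := q + 1) in hqth; auto.
  unfold Rdiv in hqth. rewrite Rmult_assoc, Rinv_l in hqth by lra. nra.
Qed.

Lemma Lc_sq : Lc ^ 2 <= (1 - th) / 2.
Proof.
  unfold Lc. set (P := Rpower (kappa + 1) (q + 1)).
  assert (HP : 0 < P) by apply Rpower_pos.
  assert (Hs2 : 0 < sqrt 2) by (apply sqrt_lt_R0; lra).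
  assert (L1 : eta1 * cq * P <= sqrt (1 - th) / sqrt 2).
  { apply Rmult_le_reg_r with (/ (cq * P)). apply Rinv_0_lt_compat; nra.
    replace (eta1 * cq * P * / (cq * P)) with eta1 by (field; lra).
    replace (sqrt (1 - th) / sqrt 2 * / (cq * P)) with (sqrt (1 - th) / (sqrt 2 * cq * P)) by (field; lra). auto. }
  assert (0 <= eta1 * cq * P) by (apply Rmult_le_pos; nra).
  assert (0 <= sqrt (1 - th) / sqrt 2) by (apply Rmult_le_pos; [apply sqrt_pos| left; apply Rinv_0_lt_compat; lra]).
  assert (E : (sqrt (1 - th) / sqrt 2) ^ 2 = (1 - th) / 2).
  { unfold Rdiv. rewrite Rpow_mult_distr, pow2_sqrt by lra. rewrite pow_inv, pow2_sqrt by lra. reflexivity. }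
  rewrite <- E. apply pow_incr. lra.
Qed.

Lemma Lc_nonneg : 0 <= Lc.
Proof. unfold Lc. assert (0 < Rpower (kappa + 1) (q + 1)) by apply Rpower_pos. apply Rmult_le_pos; nra. Qed.

Lemma Lc_le1 : Lc <= 1.
Proof. assert (A := Lc_sq). assert (B := Lc_nonneg). nra. Qed.

Lemma Wc_eq : Wc = Rpower (kappa + 1) (q + 1) ^ 2.
Proof. unfold Wc. rewrite <- Rpower_sq. ring. Qed.

Lemma eta_cq_sq : (eta1 * cq) ^ 2 * Wc <= (1 - th) / 2.
Proof. rewrite Wc_eq. assert (A := Lc_sq). unfold Lc in A. replace ((eta1 * cq) ^ 2 * Rpower (kappa + 1) (q + 1) ^ 2) with ((eta1 * cq * Rpower (kappa + 1) (q + 1)) ^ 2) by ring. auto. Qed.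

Lemma Wc_pos : 0 < Wc.
Proof. apply Rpower_pos. Qed.

Lemma Wc_ge_k2 : kappa ^ 2 <= Wc.
Proof.
  unfold Wc. apply Rle_trans with (Rpower (kappa + 1) 2).
  - rewrite Rpower_two by lra. apply pow_incr. lra.
  - apply Rpower_mono_exp; lra.
Qed.

Lemma Wc_ge_kq : 0 < kappa -> Rpower (kappa ^ 2) (q + 1) <= Wc.
Proof.
  intros Hk. unfold Wc. rewrite <- Rpower_two by lra. rewrite Rpower_mult.
  apply Rpower_mono_base; lra.
Qed.

Definition beta := 2 * th - q * (1 - th).

Lemma PL1 : forall s B a d, 1 <= s -> 1 <= B ->
  Rabs d <= cq * (1 + powr (Rabs a) q) ->
  a ^ 2 <= kappa ^ 2 * B * Rpower s (1 - th) ->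
  (eta1 * Rpower s (- th)) ^ 2 * kappa ^ 2 * d ^ 2 <= (1 - th) * (1 + Rpower B q) * Rpower s (- beta).
Proof.
  intros s B a d Hs HB Hd Ha.
  set (p := powr (Rabs a) q).
  assert (Hp0 : 0 <= p) by apply powr_nonneg.
  assert (Hd2 : d ^ 2 <= cq ^ 2 * (2 + 2 * p ^ 2)).
  { assert (d ^ 2 <= (cq * (1 + p)) ^ 2). { rewrite <- (pow2_abs d). assert (0 <= Rabs d) by apply Rabs_pos. assert (0 <= cq * (1 + p)) by (apply Rmult_le_pos; lra). apply pow_incr. fold p in Hd. lra. }
    assert ((1 + p) ^ 2 <= 2 + 2 * p ^ 2) by (assert (0 <= (p - 1) ^ 2) by apply pow2_ge_0; nra). assert (0 <= cq ^ 2) by apply pow2_ge_0. nra. }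
  set (Z := Rpower s (q * (1 - th))).
  assert (HZ : 1 <= Z) by (apply Rpower_ge1; [lra| apply Rmult_le_pos; lra]).
  assert (HBq : 0 < Rpower B q) by apply Rpower_pos.
  assert (Key : kappa ^ 2 * (2 + 2 * p ^ 2) <= 2 * Wc * (1 + Rpower B q) * Z).
  { assert (W1 := Wc_ge_k2). assert (W0 := Wc_pos).
    destruct (Req_dec a 0) as [Ha0|Ha0].
    - assert (p <= 1). { unfold p. apply powr_le1; auto. rewrite Ha0, Rabs_R0. lra. }
      assert (p ^ 2 <= 1) by nra.
      assert (kappa ^ 2 * (2 + 2 * p ^ 2) <= 4 * Wc) by (assert (0 <= kappa ^ 2) by nra; nra).
      assert (2 * Wc * 2 <= 2 * Wc * (1 + Rpower B q) * Z).
      { assert (2 <= (1 + Rpower B q) * Z).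
        { assert (1 <= Rpower B q) by (apply Rpower_ge1; lra). nra. }
        nra. }
      lra.
    - assert (Hapos : 0 < Rabs a) by (apply Rabs_pos_lt; auto).
      assert (Ha2 : 0 < a ^ 2) by nra.
      assert (Hkpos : 0 < kappa).
      { destruct (Req_dec kappa 0) as [Hk0|]; [|lra]. rewrite Hk0 in Ha. simpl in Ha. nra. }
      assert (Ep : p ^ 2 = Rpower (a ^ 2) q).
      { unfold p. rewrite powr_pos_eq by auto.
        replace (Rpower (Rabs a) q ^ 2) with (Rpower (Rabs a) q * Rpower (Rabs a) q) by ring.
        rewrite Rpower_sq. replace (a ^ 2) with (Rpower (Rabs a) 2) by (rewrite Rpower_two, pow2_abs; auto).
        rewrite Rpower_mult. reflexivity. }
      assert (Hsp : 0 < Rpower s (1 - th)) by apply Rpower_pos.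
      assert (Hp2 : p ^ 2 <= Rpower (kappa ^ 2) q * Rpower B q * Z).
      { rewrite Ep. eapply Rle_trans. apply Rpower_mono_base with (y := kappa ^ 2 * B * Rpower s (1 - th)); [lra|auto].
        rewrite <- !Rpower_mult_distr by (try nra; try apply Rmult_lt_0_compat; nra).
        unfold Z. rewrite Rpower_mult. replace ((1 - th) * q) with (q * (1 - th)) by ring. lra. }
      assert (Wq := Wc_ge_kq Hkpos).
      assert (Ekq : kappa ^ 2 * Rpower (kappa ^ 2) q = Rpower (kappa ^ 2) (q + 1)).
      { rewrite Rpower_plus, Rpower_1 by nra. ring. }
      assert (0 <= kappa ^ 2) by nra.
      assert (kappa ^ 2 * p ^ 2 <= Wc * Rpower B q * Z).
      { apply Rle_trans with (kappa ^ 2 * (Rpower (kappa ^ 2) q * Rpower B q * Z)).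
        apply Rmult_le_compat_l; auto.
        replace (kappa ^ 2 * (Rpower (kappa ^ 2) q * Rpower B q * Z)) with (kappa ^ 2 * Rpower (kappa ^ 2) q * (Rpower B q * Z)) by ring.
        rewrite Ekq. replace (Wc * Rpower B q * Z) with (Wc * (Rpower B q * Z)) by ring.
        apply Rmult_le_compat_r; [nra| auto]. }
      assert (kappa ^ 2 * 2 <= 2 * Wc * Z) by nra.
      nra. }
  assert (Es : Rpower s (- th) ^ 2 * Z = Rpower s (- beta)).
  { replace (Rpower s (- th) ^ 2) with (Rpower s (- th) * Rpower s (- th)) by ring.
    unfold Z, beta. rewrite <- !Rpower_plus. f_equal. ring. }
  assert (E1 := eta_cq_sq).
  assert (Hsth : 0 < Rpower s (- th)) by apply Rpower_pos.
  assert (Hd2' : (eta1 * Rpower s (- th)) ^ 2 * kappa ^ 2 * d ^ 2 <= (eta1 * Rpower s (- th)) ^ 2 * cq ^ 2 * (kappa ^ 2 * (2 + 2 * p ^ 2))).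
  { replace ((eta1 * Rpower s (- th)) ^ 2 * cq ^ 2 * (kappa ^ 2 * (2 + 2 * p ^ 2))) with ((eta1 * Rpower s (- th)) ^ 2 * kappa ^ 2 * (cq ^ 2 * (2 + 2 * p ^ 2))) by ring.
    apply Rmult_le_compat_l; [nra| auto]. }
  eapply Rle_trans. apply Hd2'.
  apply Rle_trans with ((eta1 * Rpower s (- th)) ^ 2 * cq ^ 2 * (2 * Wc * (1 + Rpower B q) * Z)).
  { apply Rmult_le_compat_l; [nra| auto]. }
  replace ((eta1 * Rpower s (- th)) ^ 2 * cq ^ 2 * (2 * Wc * (1 + Rpower B q) * Z))
    with (2 * ((eta1 * cq) ^ 2 * Wc) * (1 + Rpower B q) * (Rpower s (- th) ^ 2 * Z)) by ring.
  rewrite Es.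
  assert (0 < Rpower s (- beta)) by apply Rpower_pos.
  assert (0 <= (eta1 * cq) ^ 2 * Wc) by (assert (W0 := Wc_pos); apply Rmult_le_pos; [apply pow2_ge_0|lra]).
  assert (2 * ((eta1 * cq) ^ 2 * Wc) <= 1 - th) by lra.
  apply Rmult_le_compat_r; [lra|]. apply Rmult_le_compat_r; lra.
Qed.

End Params.
Section Params2.
Variables q kappa th eta1 cq V0 : R.
Hypothesis hq : 0 <= q.
Hypothesis hcq : 0 < cq.
Hypothesis hk : 0 <= kappa.
Hypothesis hth : 0 < th < 1.
Hypothesis hqth : q / (q + 1) < th.
Hypothesis he1 : 0 < eta1.
Hypothesis R1a : eta1 <= sqrt (1 - th) / (sqrt 2 * cq * Rpower (kappa + 1) (q + 1)).
Hypothesis R1b : 4 * V0 * eta1 <= 1 - th.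

Lemma stab_helper : 1 <= q -> forall s a, 1 <= s -> 1 < Rabs a -> a ^ 2 <= kappa ^ 2 * Rpower s (1 - th) ->
  eta1 * cq * kappa ^ 2 * Rpower (Rabs a) (q - 1) <= Rpower s ((q - 1) * (1 - th) / 2).
Proof.
  intros hq1 s a Hs Ha Ha2.
  set (Rs := Rpower s ((1 - th) / 2)).
  assert (HRs : 0 < Rs) by apply Rpower_pos.
  assert (ERs : Rs ^ 2 = Rpower s (1 - th)).
  { unfold Rs. replace (Rpower s ((1 - th) / 2) ^ 2) with (Rpower s ((1 - th) / 2) * Rpower s ((1 - th) / 2)) by ring.
    rewrite Rpower_sq. f_equal. field. }
  assert (Hkpos : 0 < kappa).
  { destruct (Req_dec kappa 0) as [Hk0|]; [|lra]. rewrite Hk0 in Ha2. assert (1 < a ^ 2).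
    { rewrite <- pow2_abs. nra. } nra. }
  assert (Habs : Rabs a <= kappa * Rs).
  { apply abs_le_from_sq. nra. rewrite Rpow_mult_distr, ERs. auto. }
  assert (P1 : Rpower (Rabs a) (q - 1) <= Rpower (kappa * Rs) (q - 1)).
  { apply Rpower_mono_base; lra. }
  rewrite <- Rpower_mult_distr in P1 by lra.
  assert (ERs2 : Rpower Rs (q - 1) = Rpower s ((q - 1) * (1 - th) / 2)).
  { unfold Rs. rewrite Rpower_mult. f_equal. field. }
  rewrite ERs2 in P1.
  assert (Ek : kappa ^ 2 * Rpower kappa (q - 1) = Rpower kappa (q + 1)).
  { rewrite <- Rpower_two by lra. rewrite <- Rpower_plus. f_equal. ring. }
  assert (Hkk : Rpower kappa (q + 1) <= Rpower (kappa + 1) (q + 1)) by (apply Rpower_mono_base; lra).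
  assert (L : Lc q kappa eta1 cq <= 1) by (eapply Lc_le1; eauto).
  unfold Lc in L.
  set (Zs := Rpower s ((q - 1) * (1 - th) / 2)) in *.
  assert (HZ : 0 < Zs) by apply Rpower_pos.
  assert (0 < eta1 * cq) by nra.
  assert (0 <= kappa ^ 2) by nra.
  apply Rle_trans with (eta1 * cq * (kappa ^ 2 * (Rpower kappa (q - 1) * Zs))).
  { replace (eta1 * cq * kappa ^ 2 * Rpower (Rabs a) (q - 1)) with (eta1 * cq * (kappa ^ 2 * Rpower (Rabs a) (q - 1))) by ring.
    apply Rmult_le_compat_l; [lra|]. apply Rmult_le_compat_l; auto. }
  replace (eta1 * cq * (kappa ^ 2 * (Rpower kappa (q - 1) * Zs))) with (eta1 * cq * (kappa ^ 2 * Rpower kappa (q - 1)) * Zs) by ring.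
  rewrite Ek.
  assert (eta1 * cq * Rpower kappa (q + 1) <= 1).
  { apply Rle_trans with (eta1 * cq * Rpower (kappa + 1) (q + 1)); auto. apply Rmult_le_compat_l; lra. }
  assert (0 <= eta1 * cq * Rpower kappa (q + 1)) by (assert (0 < Rpower kappa (q+1)) by apply Rpower_pos; nra).
  nra.
Qed.

Lemma PL2 : 1 <= q -> forall s a d v, 1 <= s -> 0 <= v <= V0 -> - (d * a) <= v ->
  Rabs d <= cq * (1 + powr (Rabs a) q) ->
  a ^ 2 <= kappa ^ 2 * Rpower s (1 - th) ->
  - 2 * (eta1 * Rpower s (- th)) * d * a + (eta1 * Rpower s (- th)) ^ 2 * kappa ^ 2 * d ^ 2
    <= 2 * (eta1 * Rpower s (- th)) * v + (1 - th) / 2 * Rpower s (- th).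
Proof.
  intros hq1 s a d v Hs Hv Hda Hd Ha2.
  set (Ss := Rpower s (- th)).
  assert (HSs : 0 < Ss) by apply Rpower_pos.
  set (Zs := Rpower s ((q - 1) * (1 - th) / 2)).
  assert (HZ : 0 < Zs) by apply Rpower_pos.
  assert (Q := qth q th hq hqth).
  assert (E1 : Ss * Zs <= 1).
  { unfold Ss, Zs. rewrite <- Rpower_plus. apply Rpower_le1; [lra|].
    assert (0 <= q * (1 - th)) by (apply Rmult_le_pos; lra). nra. }
  assert (E2 : Ss * Ss * Zs <= Ss).
  { assert (Ss * Zs * Ss <= 1 * Ss) by (apply Rmult_le_compat_r; lra). lra. }
  assert (E3 : Ss * Ss <= Ss).
  { assert (Ss <= 1) by (apply Rpower_le1; lra). nra. }
  assert (Hη : 0 < eta1 * Ss) by nra.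
  assert (T1 : - 2 * (eta1 * Ss) * d * a <= 2 * (eta1 * Ss) * v) by nra.
  assert (EC : (eta1 * cq) ^ 2 * Wc q kappa <= (1 - th) / 2) by (eapply eta_cq_sq; eauto).
  assert (W0 := Wc_pos q kappa).
  destruct (Rle_dec (Rabs a) 1) as [Hsm|Hbig].
  -
    assert (Hp : powr (Rabs a) q <= 1) by (apply powr_le1; [split; [apply Rabs_pos| auto]| lra]).
    assert (Hd2 : d ^ 2 <= 4 * cq ^ 2).
    { rewrite <- pow2_abs. assert (0 <= Rabs d) by apply Rabs_pos. assert (Rabs d <= 2 * cq) by nra. nra. }
    assert (HW : 4 * kappa ^ 2 <= Wc q kappa).
    { unfold Wc. apply Rle_trans with (Rpower (kappa + 1) 4).
      - replace 4 with (INR 4) at 2 by (simpl; ring). rewrite Rpower_pow by lra.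
        assert (Hk2 : 4 * kappa <= (kappa + 1) ^ 2) by (assert (0 <= (kappa - 1) ^ 2) by apply pow2_ge_0; nra).
        replace ((kappa + 1) ^ 4) with (((kappa + 1) ^ 2) ^ 2) by ring.
        assert (0 <= 4 * kappa) by lra.
        assert ((4 * kappa) ^ 2 <= ((kappa + 1) ^ 2) ^ 2) by (apply pow_incr; lra). nra.
      - apply Rpower_mono_exp; lra. }
    assert ((eta1 * Ss) ^ 2 * kappa ^ 2 * d ^ 2 <= (1 - th) / 2 * Ss).
    { apply Rle_trans with ((eta1 * Ss) ^ 2 * kappa ^ 2 * (4 * cq ^ 2)).
      { apply Rmult_le_compat_l; [nra| auto]. }
      replace ((eta1 * Ss) ^ 2 * kappa ^ 2 * (4 * cq ^ 2)) with ((eta1 * cq) ^ 2 * (4 * kappa ^ 2) * (Ss * Ss)) by ring.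
      assert ((eta1 * cq) ^ 2 * (4 * kappa ^ 2) <= (1 - th) / 2).
      { apply Rle_trans with ((eta1 * cq) ^ 2 * Wc q kappa); auto. apply Rmult_le_compat_l; [apply pow2_ge_0| auto]. }
      assert (0 <= (eta1 * cq) ^ 2 * (4 * kappa ^ 2)) by (apply Rmult_le_pos; [apply pow2_ge_0| nra]).
      assert (0 <= Ss * Ss) by nra. nra. }
    lra.
  - apply Rnot_le_lt in Hbig.
    assert (Hapos : 0 < Rabs a) by lra.
    set (P1 := Rpower (Rabs a) (q - 1)).
    assert (HP1 : 0 < P1) by apply Rpower_pos.
    assert (Ep : powr (Rabs a) q = Rabs a * P1).
    { rewrite powr_pos_eq by lra. unfold P1. replace q with (1 + (q - 1)) at 1 by ring. rewrite Rpower_plus, Rpower_1; lra. }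
    assert (HP1ge : 1 <= P1) by (apply Rpower_ge1; lra).
    assert (Hd' : Rabs d <= cq * 2 * Rabs a * P1).
    { rewrite Ep in Hd. assert (1 <= Rabs a * P1) by nra.
      assert (cq * (1 + Rabs a * P1) <= cq * (2 * (Rabs a * P1))) by (apply Rmult_le_compat_l; lra). lra. }
    assert (SH := stab_helper hq1 s a Hs Hbig Ha2). fold P1 Zs in SH.
    assert (Hd0 : 0 <= Rabs d) by apply Rabs_pos.
    assert (Edd : d ^ 2 = Rabs d * Rabs d) by (rewrite <- pow2_abs; ring).
    destruct (Rle_dec (d * a) 0) as [Hneg|Hpos].
    +
      assert (Hda2 : Rabs d * Rabs a <= V0).
      { rewrite <- Rabs_mult. rewrite Rabs_left1 by auto. lra. }
      assert (Hd2 : d ^ 2 <= 2 * cq * V0 * P1).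
      { rewrite Edd. apply Rle_trans with (Rabs d * (cq * 2 * Rabs a * P1)).
        apply Rmult_le_compat_l; auto. nra. }
      assert (V0pos : 0 <= V0) by lra.
      assert ((eta1 * Ss) ^ 2 * kappa ^ 2 * d ^ 2 <= (1 - th) / 2 * Ss).
      { apply Rle_trans with ((eta1 * Ss) ^ 2 * kappa ^ 2 * (2 * cq * V0 * P1)).
        { apply Rmult_le_compat_l; [nra| auto]. }
        replace ((eta1 * Ss) ^ 2 * kappa ^ 2 * (2 * cq * V0 * P1)) with ((2 * eta1 * V0) * (eta1 * cq * kappa ^ 2 * P1) * (Ss * Ss)) by ring.
        assert (0 <= 2 * eta1 * V0 <= (1 - th) / 2) by (split; nra).
        assert (0 <= eta1 * cq * kappa ^ 2 * P1) by (apply Rmult_le_pos; [apply Rmult_le_pos; [apply Rmult_le_pos; lra| apply pow2_ge_0]| lra]).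
        apply Rle_trans with ((1 - th) / 2 * Zs * (Ss * Ss)).
        { apply Rmult_le_compat_r; [nra|]. apply Rmult_le_compat; lra. }
        nra. }
      lra.
    + apply Rnot_le_lt in Hpos.
      assert (Eda : d * a = Rabs d * Rabs a) by (rewrite <- Rabs_mult; rewrite Rabs_pos_eq; lra).
      assert (Hk2 : eta1 * Ss * kappa ^ 2 * Rabs d <= 2 * Rabs a).
      { apply Rle_trans with (eta1 * Ss * kappa ^ 2 * (cq * 2 * Rabs a * P1)).
        { apply Rmult_le_compat_l; [assert (0 <= kappa ^ 2) by nra; nra| auto]. }
        replace (eta1 * Ss * kappa ^ 2 * (cq * 2 * Rabs a * P1)) with (2 * Rabs a * (eta1 * cq * kappa ^ 2 * P1) * Ss) by ring.
        assert (0 <= eta1 * cq * kappa ^ 2 * P1) by (apply Rmult_le_pos; [apply Rmult_le_pos; [apply Rmult_le_pos; lra| apply pow2_ge_0]| lra]).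
        apply Rle_trans with (2 * Rabs a * Zs * Ss).
        { apply Rmult_le_compat_r; [lra|]. apply Rmult_le_compat_l; lra. }
        nra. }
      assert (Hφ : - 2 * (eta1 * Ss) * d * a + (eta1 * Ss) ^ 2 * kappa ^ 2 * d ^ 2 <= 0).
      { rewrite Edd.
        replace (- 2 * (eta1 * Ss) * d * a) with (- 2 * (eta1 * Ss) * (d * a)) by ring. rewrite Eda.
        replace ((eta1 * Ss) ^ 2 * kappa ^ 2 * (Rabs d * Rabs d)) with ((eta1 * Ss) * Rabs d * (eta1 * Ss * kappa ^ 2 * Rabs d)) by ring.
        assert (0 <= eta1 * Ss * Rabs d) by nra. nra. }
      assert (0 <= 2 * (eta1 * Ss) * v) by nra.
      assert (0 <= (1 - th) / 2 * Ss) by nra.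
      lra.
Qed.

End Params2.
Lemma seq_bound : forall (N : nat -> R) th B C, 0 < th < 1 -> 0 <= C <= B ->
  N 1%nat <= 0 ->
  (forall t, (1 <= t)%nat -> N t <= B * Rpower (INR t) (1 - th) ->
       N (S t) <= N t + (1 - th) * C * Rpower (INR t) (- th)) ->
  forall t, (1 <= t)%nat -> N t <= B * Rpower (INR t) (1 - th).
Proof.
  intros N th B C Hth HC H1 Hstep.
  set (I := fun t : nat => N t <= C * ((1 - th) * sumR (t - 1) (fun j => Rpower (INR (S j)) (- th)))).
  assert (Imp : forall t, (1 <= t)%nat -> I t -> N t <= B * Rpower (INR t) (1 - th)).
  { intros t Ht It. unfold I in It.
    assert (P := Rpower_pos (INR t) (1 - th)).
    destruct (Nat.eq_dec t 1) as [E|E].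
    - subst t. simpl in It. nra.
    - assert (S1 := sum_pow_theta th (t - 1) Hth ltac:(lia)).
      assert (M : Rpower (INR (t - 1)) (1 - th) <= Rpower (INR t) (1 - th)).
      { apply Rpower_mono_base; [|lra]. split. apply lt_0_INR; lia. apply le_INR; lia. }
      assert (C * ((1 - th) * sumR (t - 1) (fun j => Rpower (INR (S j)) (- th))) <= C * Rpower (INR t) (1 - th)).
      { apply Rmult_le_compat_l; lra. }
      nra. }
  assert (All : forall t, (1 <= t)%nat -> I t).
  { intros t Ht. induction t as [|t IH]; [lia|].
    destruct t as [|t].
    - unfold I. simpl. lra.
    - specialize (IH ltac:(lia)).
      assert (B1 := Imp (S t) ltac:(lia) IH).
      specialize (Hstep (S t) ltac:(lia) B1).
      unfold I in *. replace (S (S t) - 1)%nat with (S t) by lia.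
      replace (S t - 1)%nat with t in IH by lia.
      rewrite sumR_Sr. nra. }
  intros t Ht. apply Imp; auto.
Qed.
Lemma Rpower_anti : forall x y c, 0 < x <= y -> 0 <= c -> Rpower y (- c) <= Rpower x (- c).
Proof.
  intros. rewrite !Rpower_Ropp. apply Rinv_le_contravar. apply Rpower_pos. apply Rpower_mono_base; lra.
Qed.

Lemma Rpower_half : forall T b, 0 < T -> Rpower (T / 2) (- b) = Rpower 2 b * Rpower T (- b).
Proof.
  intros. unfold Rpower. rewrite <- exp_plus. f_equal. unfold Rdiv. rewrite ln_mult, ln_Rinv by lra. ring.
Qed.

Lemma ln_ge1 : forall T, 3 <= T -> 1 <= ln T.
Proof.
  intros T HT. destruct (Rle_dec 1 (ln T)) as [h|h]; auto. exfalso.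
  assert (exp (ln T) < exp 1) by (apply exp_increasing; lra).
  rewrite exp_ln in H by lra. assert (E := exp_le_3). lra.
Qed.

Definition Kc (q th : R) : R :=
  if Rlt_dec ((q + 1) / (q + 2)) th then (3 * beta q th + 8) / (beta q th - 1) else 14.

Lemma Rpower_div_T : forall T a, 0 < T -> Rpower T a / T = Rpower T (a - 1).
Proof. intros. unfold Rminus. rewrite Rpower_plus, Rpower_Ropp, Rpower_1 by auto. reflexivity. Qed.

Lemma beta_facts : forall q th, 0 <= q -> 0 < th < 1 -> q / (q + 1) < th ->
  th < beta q th /\ beta q th < 2 /\
  (((q + 1) / (q + 2) < th) <-> 1 < beta q th) /\
  (th = (q + 1) / (q + 2) -> beta q th = 1) /\
  (th < (q + 1) / (q + 2) -> beta q th < 1).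
Proof.
  intros q th hq hth hqth.
  assert (Q := qth q th hq hqth).
  assert (E : forall x, x / (q + 2) < th <-> x < th * (q + 2)).
  { intros x. split; intro h.
    - apply Rmult_lt_compat_r with (r := q + 2) in h; [|lra]. unfold Rdiv in h. rewrite Rmult_assoc, Rinv_l in h; lra.
    - apply Rmult_lt_reg_r with (q + 2); [lra|]. unfold Rdiv. rewrite Rmult_assoc, Rinv_l; lra. }
  unfold beta. repeat split; try nra.
  - intro h. apply E in h. nra.
  - intro h. apply E. nra.
  - intro h. rewrite h. field. lra.
  - intro h. assert (th * (q + 2) < q + 1).
    { apply Rmult_lt_compat_r with (r := q + 2) in h; [|lra]. unfold Rdiv in h. rewrite Rmult_assoc, Rinv_l in h; lra. }
    nra.
Qed.

Lemma Fterm : forall q th T, 0 <= q -> 0 < th < 1 -> q / (q + 1) < th -> (3 <= T)%nat ->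
  Rpower (INR T) (- (1 - th)) <= LambdaT q th T.
Proof.
  intros q th T hq hth hqth HT.
  assert (HTr : 3 <= INR T) by (replace 3 with (INR 3) by (simpl; ring); apply le_INR; lia).
  assert (L := ln_ge1 _ HTr).
  destruct (beta_facts q th hq hth hqth) as [b1 [b2 [b3 [b4 b5]]]].
  unfold LambdaT. destruct (Rlt_dec ((q + 1) / (q + 2)) th) as [c1|c1]; [lra|].
  destruct (Req_EM_T th ((q + 1) / (q + 2))) as [c2|c2].
  - assert (0 < Rpower (INR T) (- (1 - th))) by apply Rpower_pos. nra.
  - assert (c3 : th < (q + 1) / (q + 2)) by lra. specialize (b5 c3).
    assert (Rpower (INR T) (- (1 - th)) <= Rpower (INR T) (- (th * (1 + q) - q))).
    { apply Rpower_mono_exp; [lra|]. unfold beta in b5. nra. }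
    assert (0 < Rpower (INR T) (- (th * (1 + q) - q))) by apply Rpower_pos. nra.
Qed.

Lemma rate : forall q th T (Q : nat -> R) C2, 0 <= q -> 0 < th < 1 -> q / (q + 1) < th ->
  (3 <= T)%nat -> 0 <= C2 ->
  (forall t, (1 <= t)%nat -> 0 <= Q t <= C2 * Rpower (INR t) (- beta q th)) ->
  Rpower (INR T) th * (sumR T (fun j => Q (1 + j)%nat) / INR T
     + sumR (T - 1) (fun i => / (INR (S i) * INR (S i + 1)) * sumR (S i + 1) (fun j => Q (T - S i + j)%nat)))
  <= C2 * Kc q th * LambdaT q th T.
Proof.
  intros q th T Q C2 hq hth hqth HT HC2 HQ.
  destruct (beta_facts q th hq hth hqth) as [b1 [b2 [b3 [b4 b5]]]].
  set (b := beta q th) in *.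
  set (Tr := INR T).
  assert (HTr : 3 <= Tr) by (unfold Tr; replace 3 with (INR 3) by (simpl; ring); apply le_INR; lia).
  set (P := sumR T (fun j => Rpower (INR (S j)) (- b))).
  set (Hm := sumR T (fun j => / INR (S j))).
  assert (S1 : sumR T (fun j => Q (1 + j)%nat) <= C2 * P).
  { unfold P. rewrite <- sumR_scal. apply sumR_le. intros. apply HQ. lia. }
  assert (S2 : sumR (T - 1) (fun i => / (INR (S i) * INR (S i + 1)) * sumR (S i + 1) (fun j => Q (T - S i + j)%nat))
     <= C2 * sumR (T - 1) (fun i => / INR (S i) * Rpower (INR (T - S i)) (- b))).
  { rewrite <- sumR_scal. apply sumR_le. intros i Hi.
    assert (Hk := INR_S_ge1 i).
    assert (Hk1 : INR (S i + 1) = INR (S i) + 1) by (rewrite plus_INR; simpl; ring).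
    assert (Hpos : 0 < INR (T - S i)) by (apply lt_0_INR; lia).
    assert (In : sumR (S i + 1) (fun j => Q (T - S i + j)%nat) <= INR (S i + 1) * (C2 * Rpower (INR (T - S i)) (- b))).
    { apply sumR_bound_max. intros j Hj. eapply Rle_trans. apply HQ. lia.
      apply Rmult_le_compat_l; auto. apply Rpower_anti; [|lra]. split; auto. apply le_INR; lia. }
    rewrite Hk1 in In.
    apply Rle_trans with (/ (INR (S i) * (INR (S i) + 1)) * ((INR (S i) + 1) * (C2 * Rpower (INR (T - S i)) (- b)))).
    { rewrite Hk1. apply Rmult_le_compat_l; auto. left; apply Rinv_0_lt_compat; nra. }
    right. field. lra. }
  assert (Hb0 : 0 <= b) by lra.
  assert (S3 : sumR (T - 1) (fun i => / INR (S i) * Rpower (INR (T - S i)) (- b))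
     <= Rpower 2 b * Rpower Tr (- b) * Hm + 2 / Tr * P).
  { apply Rle_trans with (sumR (T - 1) (fun i => Rpower 2 b * Rpower Tr (- b) * / INR (S i) + 2 / Tr * Rpower (INR (T - S i)) (- b))).
    { apply sumR_le. intros i Hi.
      assert (Hk := INR_S_ge1 i).
      assert (Hpos : 0 < INR (T - S i)) by (apply lt_0_INR; lia).
      assert (P1 : 0 < Rpower (INR (T - S i)) (- b)) by apply Rpower_pos.
      assert (P2 : 0 < Rpower 2 b * Rpower Tr (- b)) by (apply Rmult_lt_0_compat; apply Rpower_pos).
      assert (Hik : 0 < / INR (S i)) by (apply Rinv_0_lt_compat; lra).
      destruct (Compare_dec.le_lt_dec (2 * S i) T) as [c|c].
      - assert (Tr / 2 <= INR (T - S i)).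
        { rewrite minus_INR by lia. unfold Tr. apply le_INR in c. rewrite mult_INR in c. replace (INR 2) with 2 in c by (simpl; ring). lra. }
        assert (Rpower (INR (T - S i)) (- b) <= Rpower 2 b * Rpower Tr (- b)).
        { rewrite <- Rpower_half by lra. apply Rpower_anti; lra. }
        assert (0 <= 2 / Tr * Rpower (INR (T - S i)) (- b)) by (apply Rmult_le_pos; [apply Rmult_le_pos; [lra| left; apply Rinv_0_lt_compat; lra]| lra]).
        nra.
      - assert (/ INR (S i) <= 2 / Tr).
        { apply lt_INR in c. rewrite mult_INR in c. replace (INR 2) with 2 in c by (simpl; ring). fold Tr in c.
          apply Rmult_le_reg_r with (INR (S i) * Tr). nra.
          replace (/ INR (S i) * (INR (S i) * Tr)) with Tr by (field; lra).
          replace (2 / Tr * (INR (S i) * Tr)) with (2 * INR (S i)) by (field; lra). lra. }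
        assert (0 <= Rpower 2 b * Rpower Tr (- b) * / INR (S i)) by nra.
        nra. }
    rewrite sumR_plus, !sumR_scal.
    assert (Hrev : sumR (T - 1) (fun i => Rpower (INR (T - S i)) (- b)) = sumR (T - 1) (fun j => Rpower (INR (S j)) (- b))).
    { rewrite <- (sumR_rev (T - 1) (fun j => Rpower (INR (S j)) (- b))). apply sumR_ext. intros i Hi.
      f_equal. f_equal. lia. }
    rewrite Hrev.
    assert (PP : sumR (T - 1) (fun j => Rpower (INR (S j)) (- b)) <= P).
    { unfold P. replace T with (S (T - 1)) at 2 by lia. rewrite sumR_Sr. assert (0 < Rpower (INR (S (T - 1))) (- b)) by apply Rpower_pos. lra. }
    assert (HH : sumR (T - 1) (fun j => / INR (S j)) <= Hm).
    { unfold Hm. replace T with (S (T - 1)) at 2 by lia. rewrite sumR_Sr. assert (0 < / INR (S (T - 1))) by (apply Rinv_0_lt_compat; apply lt_0_INR; lia). lra. }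
    assert (P2 : 0 < Rpower 2 b * Rpower Tr (- b)) by (apply Rmult_lt_0_compat; apply Rpower_pos).
    assert (0 < 2 / Tr) by (apply Rmult_lt_0_compat; [lra| apply Rinv_0_lt_compat; lra]).
    apply Rplus_le_compat; apply Rmult_le_compat_l; lra. }
  set (A1 := Rpower Tr (- (1 - th))).
  set (A2 := Rpower Tr (- (th * (1 + q) - q))).
  assert (EA1 : Rpower Tr th / Tr = A1) by (unfold A1; rewrite Rpower_div_T by lra; f_equal; ring).
  assert (EA2 : Rpower Tr th * Rpower Tr (- b) = A2) by (unfold A2, b, beta; rewrite <- Rpower_plus; f_equal; ring).
  assert (HA1 : 0 < A1) by apply Rpower_pos. assert (HA2 : 0 < A2) by apply Rpower_pos.
  assert (HTt : 0 < Rpower Tr th) by apply Rpower_pos.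
  assert (HP : 0 <= P) by (apply sumR_nonneg; intros; left; apply Rpower_pos).
  assert (HHm : 0 <= Hm) by (apply sumR_nonneg; intros; left; apply Rinv_0_lt_compat; apply lt_0_INR; lia).
  assert (Main : Rpower Tr th * (sumR T (fun j => Q (1 + j)%nat) / Tr
     + sumR (T - 1) (fun i => / (INR (S i) * INR (S i + 1)) * sumR (S i + 1) (fun j => Q (T - S i + j)%nat)))
     <= C2 * (3 * A1 * P + Rpower 2 b * A2 * Hm)).
  { apply Rle_trans with (Rpower Tr th * (C2 * P / Tr + C2 * (Rpower 2 b * Rpower Tr (- b) * Hm + 2 / Tr * P))).
    { apply Rmult_le_compat_l; [lra|]. apply Rplus_le_compat.
      - apply Rmult_le_compat_r; [left; apply Rinv_0_lt_compat; lra| auto].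
      - eapply Rle_trans. apply S2. apply Rmult_le_compat_l; auto. }
    right. rewrite <- EA1, <- EA2. field. lra. }
  fold Tr. eapply Rle_trans. apply Main.
  assert (HHln : Hm <= 2 * ln Tr).
  { assert (X := harmonic T ltac:(lia)). assert (Y := ln_ge1 Tr HTr). fold Hm Tr in X. lra. }
  assert (H2b : Rpower 2 b <= 4).
  { replace 4 with (Rpower 2 2). apply Rpower_mono_exp; lra. rewrite Rpower_two by lra. ring. }
  assert (H2b0 : 0 < Rpower 2 b) by apply Rpower_pos.
  assert (Hln0 : 0 < ln Tr) by (assert (Y := ln_ge1 Tr HTr); lra).
  rewrite (Rmult_assoc C2). apply Rmult_le_compat_l; auto.
  unfold Kc, LambdaT. fold b. fold Tr A1 A2.
  destruct (Rlt_dec ((q + 1) / (q + 2)) th) as [c1|c1].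
  - assert (hb : 1 < b) by (apply b3; auto).
    assert (HPb : P <= b / (b - 1)) by (apply sum_pow_big; auto; lia).
    assert (Hlnb : ln Tr <= Rpower Tr (b - 1) / (b - 1)) by (apply ln_le_pow; lra).
    assert (EA : A2 * Rpower Tr (b - 1) = A1) by (unfold A1, A2, b, beta; rewrite <- Rpower_plus; f_equal; ring).
    assert (X1 : 3 * A1 * P <= 3 * A1 * (b / (b - 1))) by (apply Rmult_le_compat_l; lra).
    assert (X2 : Rpower 2 b * A2 * Hm <= 4 * A2 * (2 * (Rpower Tr (b - 1) / (b - 1)))).
    { apply Rle_trans with (4 * A2 * Hm). apply Rmult_le_compat_r; [lra|]. apply Rmult_le_compat_r; lra.
      apply Rmult_le_compat_l; lra. }
    assert (E3 : 3 * A1 * (b / (b - 1)) + 4 * A2 * (2 * (Rpower Tr (b - 1) / (b - 1))) = (3 * b + 8) / (b - 1) * A1).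
    { rewrite <- EA. field. lra. }
    lra.
  - destruct (Req_EM_T th ((q + 1) / (q + 2))) as [c2|c2].
    + assert (hb : b = 1) by (apply b4; auto).
      assert (HPb : P <= Hm).
      { unfold P, Hm. eapply Rle_trans. apply sum_pow_small; [lra| lia]. rewrite hb. replace (1 - 1) with 0 by ring. rewrite Rpower_O; [lra|]. apply lt_0_INR; lia. }
      assert (EA : A2 = A1).
      { unfold A1, A2. f_equal. rewrite c2. field. lra. }
      rewrite EA in *.
      assert (X1 : 3 * A1 * P <= 3 * A1 * (2 * ln Tr)) by (apply Rmult_le_compat_l; lra).
      assert (X2 : Rpower 2 b * A1 * Hm <= 4 * A1 * (2 * ln Tr)).
      { apply Rle_trans with (4 * A1 * Hm). apply Rmult_le_compat_r; [lra|]. apply Rmult_le_compat_r; lra.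
        apply Rmult_le_compat_l; lra. }
      lra.
    + assert (c3 : th < (q + 1) / (q + 2)) by lra.
      assert (hb : b < 1) by (apply b5; auto).
      assert (HPb : P <= Rpower Tr (1 - b) * Hm) by (apply sum_pow_small; [lra| lia]).
      assert (EA : A1 * Rpower Tr (1 - b) = A2) by (unfold A1, A2, b, beta; rewrite <- Rpower_plus; f_equal; ring).
      assert (HT1 : 0 < Rpower Tr (1 - b)) by apply Rpower_pos.
      assert (X1 : 3 * A1 * P <= 3 * A1 * (Rpower Tr (1 - b) * (2 * ln Tr))).
      { apply Rmult_le_compat_l; [lra|]. eapply Rle_trans. apply HPb. apply Rmult_le_compat_l; lra. }
      assert (X2 : Rpower 2 b * A2 * Hm <= 4 * A2 * (2 * ln Tr)).
      { apply Rle_trans with (4 * A2 * Hm). apply Rmult_le_compat_r; [lra|]. apply Rmult_le_compat_r; lra.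
        apply Rmult_le_compat_l; lra. }
      assert (E3 : 3 * A1 * (Rpower Tr (1 - b) * (2 * ln Tr)) = 6 * (ln Tr * A2)) by (rewrite <- EA; ring).
      lra.
Qed.
Lemma Dist_nonneg : forall (H : InnerSpace) (g u : H), 0 <= DistI H g u.
Proof.
  intros. unfold DistI. assert (A := two_inner_le H u g 1 ltac:(lra)).
  replace (inner u u / 1 + 1 * inner g g) with (inner u u + inner g g) in A by field. lra.
Qed.

Lemma Dist_self : forall (H : InnerSpace) (g : H), DistI H g g = 0.
Proof. intros. unfold DistI. ring. Qed.

Lemma Dist_sum : forall (X : Type) (H : InnerSpace) (Kx : X -> H) (V Vd : R -> R -> R) (m : nat) (xs : nat -> X) (ys : nat -> R) (eta : nat -> R) (g : H) (s n : nat),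
  (1 <= s)%nat -> (1 <= m)%nat -> (forall t, 0 <= eta t) ->
  (forall y, convexR (V y)) -> (forall y a, is_left_deriv (V y) a (Vd y a)) ->
  DistI H g (fI X H Kx Vd m xs ys eta (s + n)) <= DistI H g (fI X H Kx Vd m xs ys eta s)
    + sumR n (fun j => 2 * eta (s + j)%nat * (EI X H Kx V m xs ys g - EI X H Kx V m xs ys (fI X H Kx Vd m xs ys eta (s + j)))
        + inner (wI X H Kx Vd m xs ys eta (s + j)) (wI X H Kx Vd m xs ys eta (s + j))).
Proof.
  intros X H Kx V Vd m xs ys eta g s n Hs Hm He Hc Hd.
  induction n as [|n IH].
  - simpl. replace (s + 0)%nat with s by lia. lra.
  - rewrite sumR_Sr. replace (s + S n)%nat with (S (s + n)) by lia.
    assert (St := Dist_step X H Kx V Vd m xs ys eta (s + n) g ltac:(lia) Hm (He _) Hc Hd).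
    lra.
Qed.
Definition Bc (q : R) : R := if Rle_dec 1 q then 1 else Rpower 4 (/ (1 - q)).
Definition C2c (q th : R) : R := (1 - th) * (1 + Rpower (Bc q) q).
Definition C1c (q kappa th eta1 cq : R) : R :=
  1 + Rmax 0 (C2c q th * Kc q th / (2 * eta1))
    + Rmax 0 ((3 * (1 - th) / (8 * eta1) + 2 * C2c q th / eta1) / LambdaT q th 2).

Lemma C1c_pos : forall q kappa th eta1 cq, 0 < C1c q kappa th eta1 cq.
Proof. intros. unfold C1c. assert (A := Rmax_l 0 (C2c q th * Kc q th / (2 * eta1))).
  assert (B := Rmax_l 0 ((3 * (1 - th) / (8 * eta1) + 2 * C2c q th / eta1) / LambdaT q th 2)). lra. Qed.

Lemma Bc_ge1 : forall q, 1 <= Bc q.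
Proof.
  intros. unfold Bc. destruct (Rle_dec 1 q); [lra|].
  apply Rpower_ge1; [lra|]. left. apply Rinv_0_lt_compat. lra.
Qed.

Lemma Bc_small : forall q, 0 <= q < 1 -> Rpower (Bc q) q = Bc q / 4 /\ 4 <= Bc q.
Proof.
  intros q hq. unfold Bc. destruct (Rle_dec 1 q); [lra|].
  split.
  - rewrite Rpower_mult. rewrite Rpower_div_T by lra. f_equal. field. lra.
  - rewrite <- (Rpower_1 4) at 1 by lra. apply Rpower_mono_exp; [lra|].
    apply Rmult_le_reg_l with (1 - q); [lra|]. rewrite Rinv_r; lra.
Qed.
Section Main.
Variable X : Type.
Variable H : InnerSpace.
Variable Kx : X -> H.
Variable K : X -> X -> R.
Variable Y : R -> Prop.
Variables V Vd : R -> R -> R.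
Variable V0 : R.
Variable m : nat.
Variable xs : nat -> X.
Variable ys : nat -> R.
Variables q kappa th eta1 cq : R.
Hypothesis HK : forall x x', K x x' = inner (Kx x) (Kx x').
Hypothesis HVnn : forall y a, 0 <= V y a.
Hypothesis Hconv : forall y a b l, 0 <= l <= 1 -> V y (l * a + (1 - l) * b) <= l * V y a + (1 - l) * V y b.
Hypothesis Hld : forall y a, is_left_deriv (V y) a (Vd y a).
Hypothesis Hm : (1 <= m)%nat.
Hypothesis HY : forall i, (i < m)%nat -> Y (ys i).
Hypothesis Hkap : is_lub (fun r => exists x : X, r = sqrt (K x x)) kappa.
Hypothesis HV0 : is_lub (fun r => exists y, Y y /\ r = V y 0) V0.
Hypothesis hq : 0 <= q.
Hypothesis hcq : 0 < cq.
Hypothesis Hgrow : forall y a, Y y -> Rabs (Vd y a) <= cq * (1 + powr (Rabs a) q).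
Hypothesis hth : 0 < th < 1.
Hypothesis hqth : q / (q + 1) < th.
Hypothesis he1 : 0 < eta1.
Hypothesis R1a : eta1 <= sqrt (1 - th) / (sqrt 2 * cq * Rpower (kappa + 1) (q + 1)).
Hypothesis R1b : 4 * V0 * eta1 <= 1 - th.

Definition etaM := fun t : nat => eta1 * Rpower (INR t) (- th).
Definition fM := fI X H Kx Vd m xs ys etaM.
Definition EM := EI X H Kx V m xs ys.
Definition QM := fun t : nat => inner (wI X H Kx Vd m xs ys etaM t) (wI X H Kx Vd m xs ys etaM t).

Lemma convV : forall y, convexR (V y).
Proof. intros y a b l Hl. apply Hconv; auto. Qed.

Lemma kappa_nonneg : 0 <= kappa.
Proof.
  destruct Hkap as [Hub _]. assert (A : sqrt (K (xs 0%nat) (xs 0%nat)) <= kappa) by (apply Hub; eauto).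
  assert (0 <= sqrt (K (xs 0%nat) (xs 0%nat))) by apply sqrt_pos. lra.
Qed.

Lemma HKx : forall x, inner (Kx x) (Kx x) <= kappa ^ 2.
Proof.
  intros x. destruct Hkap as [Hub _]. assert (A : sqrt (K x x) <= kappa) by (apply Hub; eauto).
  assert (B : 0 <= K x x) by (rewrite HK; apply inner_pos).
  assert (0 <= sqrt (K x x)) by apply sqrt_pos.
  rewrite <- HK. rewrite <- (sqrt_sqrt (K x x)) by auto.
  replace (kappa ^ 2) with (kappa * kappa) by ring. apply Rmult_le_compat; auto.
Qed.

Lemma V0_bound : forall j, (j < m)%nat -> 0 <= V (ys j) 0 <= V0.
Proof. intros j Hj. split; auto. destruct HV0 as [Hub _]. apply Hub. exists (ys j). split; auto. Qed.

Lemma V0_nonneg : 0 <= V0.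
Proof. assert (A := V0_bound 0%nat ltac:(lia)). lra. Qed.

Lemma eta_nonneg : forall t, 0 <= etaM t.
Proof. intros. unfold etaM. assert (0 < Rpower (INR t) (- th)) by apply Rpower_pos. nra. Qed.

Lemma E_nonneg : forall g, 0 <= EM g.
Proof.
  intros. unfold EM, EI, emp_risk. apply Rmult_le_pos. left; apply Rinv_0_lt_compat; apply lt_0_INR; lia.
  apply sumR_nonneg. intros; auto.
Qed.

Lemma E0_bound : EM vzero <= V0.
Proof.
  unfold EM, EI, emp_risk.
  assert (Hmp : 0 < INR m) by (apply lt_0_INR; lia).
  assert (S : sumR m (fun i => V (ys i) (evalH Kx vzero (xs i))) <= INR m * V0).
  { apply sumR_bound_max. intros i Hi. unfold evalH. rewrite inner_zero_l. apply V0_bound; auto. }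
  apply Rmult_le_reg_l with (INR m); auto. rewrite <- Rmult_assoc, Rinv_r by lra. lra.
Qed.

Lemma a_sq_bound : forall t j, (aI X H Kx Vd m xs ys etaM t j) ^ 2 <= kappa ^ 2 * inner (fM t) (fM t).
Proof.
  intros. unfold aI, evalH. assert (C := cauchy_schwarz H (fI X H Kx Vd m xs ys etaM t) (Kx (xs j))).
  assert (D := HKx (xs j)). assert (P := inner_pos H (fI X H Kx Vd m xs ys etaM t)).
  unfold fM. nra.
Qed.

Lemma da_bound : forall t j, (j < m)%nat ->
  - (dI X H Kx Vd m xs ys etaM t j * aI X H Kx Vd m xs ys etaM t j) <= V (ys j) 0.
Proof.
  intros t j Hj. assert (S := subgrad (V (ys j)) (aI X H Kx Vd m xs ys etaM t j) (dI X H Kx Vd m xs ys etaM t j) (convV _) (Hld _ _) 0).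
  assert (N := HVnn (ys j) (aI X H Kx Vd m xs ys etaM t j)). lra.
Qed.

Lemma d_bound : forall t j, (j < m)%nat ->
  Rabs (dI X H Kx Vd m xs ys etaM t j) <= cq * (1 + powr (Rabs (aI X H Kx Vd m xs ys etaM t j)) q).
Proof. intros. unfold dI, aI. apply Hgrow. auto. Qed.

Lemma norm_bound : forall t, (1 <= t)%nat -> inner (fM t) (fM t) <= Bc q * Rpower (INR t) (1 - th).
Proof.
  assert (hk := kappa_nonneg). assert (V0p := V0_nonneg).
  set (B := Bc q). set (C := if Rle_dec 1 q then 1 else 3 / 2 + Rpower B q).
  assert (HB1 : 1 <= B) by apply Bc_ge1.
  assert (HC : 0 <= C <= B).
  { unfold C, B, Bc. destruct (Rle_dec 1 q) as [h|h]; [lra|].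
    destruct (Bc_small q ltac:(lra)) as [E1 E2]. unfold Bc in E1, E2. destruct (Rle_dec 1 q); [lra|].
    rewrite E1. lra. }
  apply (seq_bound (fun t => inner (fM t) (fM t)) th B C hth HC).
  { unfold fM. rewrite gd_one, inner_zero_l. lra. }
  intros t Ht HN.
  set (s := INR t). assert (Hs : 1 <= s) by (unfold s; replace 1 with (INR 1) by reflexivity; apply le_INR; auto).
  set (et := etaM t).
  assert (Het : et = eta1 * Rpower s (- th)) by reflexivity.
  assert (Hmp : 0 < INR m) by (apply lt_0_INR; lia).
  set (psi := if Rle_dec 1 q then (1 - th) / 2 * Rpower s (- th) else (1 - th) * (1 + Rpower B q) * Rpower s (- th)).
  assert (PP : forall j, (j < m)%nat ->
     - 2 * et * dI X H Kx Vd m xs ys etaM t j * aI X H Kx Vd m xs ys etaM t j + et ^ 2 * kappa ^ 2 * (dI X H Kx Vd m xs ys etaM t j) ^ 2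
      <= 2 * et * V (ys j) 0 + psi).
  { intros j Hj.
    set (a := aI X H Kx Vd m xs ys etaM t j). set (d := dI X H Kx Vd m xs ys etaM t j).
    assert (Ha : a ^ 2 <= kappa ^ 2 * B * Rpower s (1 - th)).
    { assert (A := a_sq_bound t j). fold a in A. assert (0 <= kappa ^ 2) by apply pow2_ge_0.
      apply Rle_trans with (1 := A). rewrite Rmult_assoc. apply Rmult_le_compat_l; auto. }
    assert (Hd := d_bound t j Hj). fold a d in Hd.
    assert (Hda := da_bound t j Hj). fold a d in Hda.
    assert (Hv := V0_bound j Hj).
    unfold psi. destruct (Rle_dec 1 q) as [h1|h1].
    - assert (EB : B = 1) by (unfold B, Bc; destruct (Rle_dec 1 q); [auto|lra]).
      rewrite EB, Rmult_1_r in Ha. rewrite Het.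
      eapply (PL2 q kappa th eta1 cq V0); eauto.
    - assert (Q1 : (eta1 * Rpower s (- th)) ^ 2 * kappa ^ 2 * d ^ 2 <= (1 - th) * (1 + Rpower B q) * Rpower s (- beta q th)) by (eapply (PL1 q kappa th eta1 cq); eauto).
      assert (Q2 : Rpower s (- beta q th) <= Rpower s (- th)).
      { apply Rpower_mono_exp; auto. assert (Qt := qth q th hq hqth). unfold beta. lra. }
      assert (0 <= (1 - th) * (1 + Rpower B q)) by (assert (0 < Rpower B q) by apply Rpower_pos; apply Rmult_le_pos; lra).
      assert (- 2 * et * d * a <= 2 * et * V (ys j) 0).
      { assert (0 <= et) by apply eta_nonneg. nra. }
      rewrite <- Het in Q1.
      assert ((1 - th) * (1 + Rpower B q) * Rpower s (- beta q th) <= (1 - th) * (1 + Rpower B q) * Rpower s (- th)) by (apply Rmult_le_compat_l; auto).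
      lra. }
  unfold fM. rewrite (norm_step X H Kx Vd m xs ys etaM t Ht).
  assert (W := w_norm X H Kx Vd m xs ys etaM t kappa Hm HKx). fold et in W.
  assert (Sm := sumR_le m _ _ PP).
  assert (ER : sumR m (fun j => 2 * et * V (ys j) 0 + psi) = sumR m (fun j => 2 * et * V (ys j) 0) + INR m * psi)
    by (rewrite sumR_plus, sumR_const; reflexivity).
  rewrite ER in Sm.
  assert (SV : sumR m (fun j => 2 * et * V (ys j) 0) <= INR m * (2 * et * V0)).
  { apply sumR_bound_max. intros j Hj. assert (0 <= et) by apply eta_nonneg. assert (Hv := V0_bound j Hj). nra. }
  assert (E1 : sumR m (fun j => - 2 * et * dI X H Kx Vd m xs ys etaM t j * aI X H Kx Vd m xs ys etaM t j + et ^ 2 * kappa ^ 2 * dI X H Kx Vd m xs ys etaM t j ^ 2)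
     = - 2 * et * sumR m (fun j => dI X H Kx Vd m xs ys etaM t j * aI X H Kx Vd m xs ys etaM t j) + et ^ 2 * kappa ^ 2 * sumR m (fun j => dI X H Kx Vd m xs ys etaM t j ^ 2)).
  { rewrite <- !sumR_scal, <- sumR_plus. apply sumR_ext. intros. ring. }
  rewrite E1 in Sm.
  set (SA := sumR m (fun j => dI X H Kx Vd m xs ys etaM t j * aI X H Kx Vd m xs ys etaM t j)) in *.
  set (SD := sumR m (fun j => dI X H Kx Vd m xs ys etaM t j ^ 2)) in *.
  assert (Avg : 2 * (- (et * / INR m) * SA) + et ^ 2 * kappa ^ 2 * / INR m * SD <= 2 * et * V0 + psi).
  { apply Rmult_le_reg_l with (INR m); auto.
    replace (INR m * (2 * (- (et * / INR m) * SA) + et ^ 2 * kappa ^ 2 * / INR m * SD)) with (- 2 * et * SA + et ^ 2 * kappa ^ 2 * SD) by (field; lra).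
    lra. }
  assert (Hv0 : 2 * et * V0 <= (1 - th) / 2 * Rpower s (- th)).
  { rewrite Het. assert (0 < Rpower s (- th)) by apply Rpower_pos.
    replace (2 * (eta1 * Rpower s (- th)) * V0) with ((2 * V0 * eta1) * Rpower s (- th)) by ring.
    apply Rmult_le_compat_r; lra. }
  assert (Fin : 2 * et * V0 + psi <= (1 - th) * C * Rpower s (- th)).
  { unfold psi, C. destruct (Rle_dec 1 q); lra. }
  fold et. unfold fM in *. fold s. lra.
Qed.

Lemma Q_bound : forall t, (1 <= t)%nat -> 0 <= QM t <= C2c q th * Rpower (INR t) (- beta q th).
Proof.
  intros t Ht. split. apply inner_pos.
  assert (hk := kappa_nonneg).
  set (s := INR t). assert (Hs : 1 <= s) by (unfold s; replace 1 with (INR 1) by reflexivity; apply le_INR; auto).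
  assert (Hmp : 0 < INR m) by (apply lt_0_INR; lia).
  assert (W := w_norm X H Kx Vd m xs ys etaM t kappa Hm HKx). unfold QM.
  eapply Rle_trans. apply W.
  assert (NB := norm_bound t Ht).
  assert (PP : forall j, (j < m)%nat -> etaM t ^ 2 * kappa ^ 2 * (dI X H Kx Vd m xs ys etaM t j) ^ 2 <= C2c q th * Rpower s (- beta q th)).
  { intros j Hj. unfold C2c.
    set (a := aI X H Kx Vd m xs ys etaM t j). set (d := dI X H Kx Vd m xs ys etaM t j).
    assert (Ha : a ^ 2 <= kappa ^ 2 * Bc q * Rpower s (1 - th)).
    { assert (A := a_sq_bound t j). fold a in A. assert (0 <= kappa ^ 2) by apply pow2_ge_0.
      apply Rle_trans with (1 := A). rewrite Rmult_assoc. apply Rmult_le_compat_l; auto. }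
    assert (Hd := d_bound t j Hj). fold a d in Hd.
    eapply (PL1 q kappa th eta1 cq); eauto. apply Bc_ge1. }
  assert (Sm := sumR_bound_max m _ _ PP).
  apply Rmult_le_reg_l with (INR m); auto.
  replace (INR m * (etaM t ^ 2 * kappa ^ 2 * / INR m * sumR m (fun j => dI X H Kx Vd m xs ys etaM t j ^ 2)))
    with (sumR m (fun i => etaM t ^ 2 * kappa ^ 2 * dI X H Kx Vd m xs ys etaM t i ^ 2))
    by (rewrite (sumR_scal m (etaM t ^ 2 * kappa ^ 2) (fun j => dI X H Kx Vd m xs ys etaM t j ^ 2)); field; lra).
  fold s. lra.
Qed.


Lemma Lambda_pos : forall T, (2 <= T)%nat -> 0 < LambdaT q th T.
Proof.
  intros T HT. assert (HTr : 2 <= INR T) by (replace 2 with (INR 2) by (simpl; ring); apply le_INR; lia).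
  assert (Hl : 0 < ln (INR T)) by (rewrite <- ln_1; apply ln_increasing; lra).
  unfold LambdaT. destruct (Rlt_dec _ _). apply Rpower_pos.
  destruct (Req_EM_T _ _); apply Rmult_lt_0_compat; auto; apply Rpower_pos.
Qed.

Lemma H1_fact : forall T s, (1 <= s <= T)%nat ->
  sumR (T - s + 1) (fun j => 2 * etaM (s + j)%nat * (EM (fM (s + j)%nat) - EM (fM s))) <= sumR (T - s + 1) (fun j => QM (s + j)%nat).
Proof.
  intros T s Hs.
  assert (D := Dist_sum X H Kx V Vd m xs ys etaM (fM s) s (T - s + 1) ltac:(lia) Hm eta_nonneg convV Hld).
  fold fM EM in D. rewrite Dist_self in D.
  assert (N := Dist_nonneg H (fM s) (fM (s + (T - s + 1)))).
  rewrite sumR_plus in D.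
  assert (E : sumR (T - s + 1) (fun j => 2 * etaM (s + j)%nat * (EM (fM s) - EM (fM (s + j)%nat)))
       = - sumR (T - s + 1) (fun j => 2 * etaM (s + j)%nat * (EM (fM (s + j)%nat) - EM (fM s)))).
  { replace (- sumR (T - s + 1) (fun j => 2 * etaM (s + j)%nat * (EM (fM (s + j)%nat) - EM (fM s))))
      with (-1 * sumR (T - s + 1) (fun j => 2 * etaM (s + j)%nat * (EM (fM (s + j)%nat) - EM (fM s)))) by ring.
    rewrite <- sumR_scal. apply sumR_ext. intros. ring. }
  rewrite E in D. unfold QM. lra.
Qed.

Lemma H2_fact : forall T (fstar : H),
  sumR T (fun j => 2 * etaM (1 + j)%nat * (EM (fM (1 + j)%nat) - EM fstar)) <= inner fstar fstar + sumR T (fun j => QM (1 + j)%nat).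
Proof.
  intros T fstar.
  assert (D := Dist_sum X H Kx V Vd m xs ys etaM fstar 1 T ltac:(lia) Hm eta_nonneg convV Hld).
  fold fM EM in D.
  assert (N := Dist_nonneg H fstar (fM (1 + T))).
  assert (E1 : DistI H fstar (fM 1) = inner fstar fstar).
  { unfold DistI, fM. rewrite gd_one, inner_zero_l, inner_zero_l. ring. }
  rewrite E1, sumR_plus in D.
  assert (E : sumR T (fun j => 2 * etaM (1 + j)%nat * (EM fstar - EM (fM (1 + j)%nat)))
       = - sumR T (fun j => 2 * etaM (1 + j)%nat * (EM (fM (1 + j)%nat) - EM fstar))).
  { replace (- sumR T (fun j => 2 * etaM (1 + j)%nat * (EM (fM (1 + j)%nat) - EM fstar)))
      with (-1 * sumR T (fun j => 2 * etaM (1 + j)%nat * (EM (fM (1 + j)%nat) - EM fstar))) by ring.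
    rewrite <- sumR_scal. apply sumR_ext. intros. ring. }
  rewrite E in D. unfold QM. lra.
Qed.

Lemma main_bound : forall (fstar : H) (T : nat) (Mth : R),
  (exists t, (1 <= t)%nat /\ Mth = cth_fun th t) -> (2 <= T)%nat ->
  EM (fM T) - EM fstar <=
   (inner fstar fstar / (2 * eta1) + (/ (1 - th) * (1 + Mth)) * EM fstar + C1c q kappa th eta1 cq) * LambdaT q th T
   + Rpower (INR T) th / (2 * eta1) *
     sumR (T - 1) (fun i => let k := S i in
       / INR (k + 1) * (/ INR k * sumR k (fun j => 2 * etaM (T - k + 1 + j)%nat) - 2 * etaM (T - k)%nat)
       * (EM (fM (T - k)%nat) - EM fstar)).
Proof.
  intros fstar T Mth HMth HT.
  assert (HMp : 0 <= Mth).
  { destruct HMth as [t [Ht E]]. rewrite E. unfold cth_fun.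
    assert (0 < ln 4) by (rewrite <- ln_1; apply ln_increasing; lra).
    assert (Ht1 : 1 <= INR t) by (replace 1 with (INR 1) by reflexivity; apply le_INR; auto).
    assert (0 <= ln (INR t)).
    { destruct (Req_dec (INR t) 1) as [e|e]. rewrite e, ln_1; lra. left. rewrite <- ln_1. apply ln_increasing; lra. }
    assert (0 < Rpower (INR t) (- th)) by apply Rpower_pos.
    apply Rmult_le_pos; [|lra]. apply Rmult_le_pos; lra. }
  set (F := inner fstar fstar). assert (HF : 0 <= F) by apply inner_pos.
  set (cth := / (1 - th) * (1 + Mth)).
  assert (Hcth : 0 <= cth) by (unfold cth; apply Rmult_le_pos; [left; apply Rinv_0_lt_compat; lra| lra]).
  set (es := EM fstar). assert (Hes : 0 <= es) by apply E_nonneg.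
  assert (HL := Lambda_pos T HT). set (L := LambdaT q th T) in *.
  set (Tr := INR T). assert (HTr : 2 <= Tr) by (unfold Tr; replace 2 with (INR 2) by (simpl; ring); apply le_INR; lia).
  set (C2 := C2c q th).
  assert (HC2 : 0 <= C2) by (unfold C2, C2c; assert (0 < Rpower (Bc q) q) by apply Rpower_pos; apply Rmult_le_pos; lra).
  set (C1 := C1c q kappa th eta1 cq).
  assert (HcthL : 0 <= cth * es * L) by (apply Rmult_le_pos; [apply Rmult_le_pos|]; lra).
  assert (HFL : 0 <= F / (2 * eta1) * L) by (apply Rmult_le_pos; [apply Rmult_le_pos; [lra| left; apply Rinv_0_lt_compat; lra]| lra]).
  destruct (Nat.eq_dec T 2) as [ET|ET].
  -
    subst T. assert (H1 := H1_fact 2 1 ltac:(lia)).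
    cbv beta iota zeta delta [sumR Nat.add Nat.sub] in H1 |- *.
    assert (Q1 := Q_bound 1 ltac:(lia)). assert (Q2 := Q_bound 2 ltac:(lia)).
    replace (INR 1) with 1 in * by reflexivity.
    replace (INR 2) with 2 in * by (simpl; ring).
    rewrite Rpower_1_base in Q1.
    assert (Q2' : Rpower 2 (- beta q th) <= 1).
    { apply Rpower_le1; [lra|]. destruct (beta_facts q th hq hth hqth). lra. }
    assert (QQ : QM 1 + QM 2 <= 2 * C2).
    { fold C2 in Q1, Q2. assert (C2 * Rpower 2 (- beta q th) <= C2 * 1) by (apply Rmult_le_compat_l; lra). lra. }
    unfold etaM in *. replace (INR 1) with 1 in * by reflexivity. replace (INR 2) with 2 in * by (simpl; ring).
    rewrite Rpower_1_base in *.
    set (p := Rpower 2 th) in *.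
    assert (Hp1 : 1 <= p) by (apply Rpower_ge1; lra).
    assert (Hp2 : p <= 2) by (unfold p; rewrite <- (Rpower_1 2) at 2 by lra; apply Rpower_mono_exp; lra).
    assert (Ep : Rpower 2 (- th) = / p) by (unfold p; apply Rpower_Ropp).
    rewrite Ep in *.
    set (e1 := EM (fM 1)) in *. set (e2 := EM (fM 2)) in *.
    assert (He1 : 0 <= e1 <= V0).
    { split. apply E_nonneg. unfold e1, fM. rewrite gd_one. apply E0_bound. }
    assert (Hpos : 0 < 2 * (eta1 * / p)) by (apply Rmult_lt_0_compat; [lra| apply Rmult_lt_0_compat; [lra| apply Rinv_0_lt_compat; lra]]).
    assert (He2 : e2 - e1 <= 2 * C2 / (2 * (eta1 * / p))).
    { apply Rmult_le_reg_l with (2 * (eta1 * / p)); auto.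
      replace (2 * (eta1 * / p) * (2 * C2 / (2 * (eta1 * / p)))) with (2 * C2) by (field; lra).
      replace (e1 - e1) with 0 in H1 by ring. lra. }
    replace (2 * C2 / (2 * (eta1 * / p))) with (C2 * p / eta1) in He2 by (field; lra).
    assert (Hc2p : C2 * p / eta1 <= 2 * C2 / eta1).
    { unfold Rdiv. apply Rmult_le_compat_r; [left; apply Rinv_0_lt_compat; lra| nra]. }
    assert (HV0b : V0 <= (1 - th) / (4 * eta1)).
    { apply Rmult_le_reg_l with (4 * eta1); [lra|]. replace (4 * eta1 * ((1 - th) / (4 * eta1))) with (1 - th) by (field; lra). lra. }
    set (Z := 3 * (1 - th) / (8 * eta1) + 2 * C2 / eta1).
    assert (HC1 : Z <= C1 * L).
    { unfold C1, C1c. fold C2. fold Z. fold L.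
      assert (A := Rmax_r 0 (Z / L)).
      assert (B := Rmax_l 0 (C2 * Kc q th / (2 * eta1))).
      assert (Z = Z / L * L) by (field; lra).
      assert (Z / L * L <= Rmax 0 (Z / L) * L) by (apply Rmult_le_compat_r; lra).
      assert (0 <= (1 + Rmax 0 (C2 * Kc q th / (2 * eta1))) * L) by (apply Rmult_le_pos; lra).
      nra. }
    assert (ETr : Rpower Tr th = p) by (unfold p, Tr; replace (INR 2) with 2 by (simpl; ring); reflexivity).
    rewrite ETr.
    assert (Eterm : p / (2 * eta1) * (0 + / 2 * (/ 1 * (0 + 2 * (eta1 * / p)) - 2 * (eta1 * 1)) * (e1 - es)) = (1 - p) / 2 * (e1 - es)).
    { field. split; lra. }
    rewrite Eterm.
    assert (Z3 : 3 * (1 - th) / (8 * eta1) >= 3 / 2 * V0).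
    { replace (3 * (1 - th) / (8 * eta1)) with (3 / 2 * ((1 - th) / (4 * eta1))) by (field; lra). lra. }
    assert (e1 - (1 - p) / 2 * e1 <= 3 / 2 * V0) by nra.
    assert (- es <= - ((1 - p) / 2 * es)) by nra.
    unfold Z in HC1.
    assert (Expand : (F / (2 * eta1) + cth * es + C1) * L = F / (2 * eta1) * L + cth * es * L + C1 * L) by ring.
    rewrite Expand. lra.
  -
    assert (HT3 : (3 <= T)%nat) by lia.
    assert (tel := telescope T (fun t => 2 * etaM t) (fun t => EM (fM t)) QM es F HT (H1_fact T) (H2_fact T fstar)).
    cbv beta in tel. fold Tr in tel.
    assert (Rt := rate q th T QM C2 hq hth hqth HT3 HC2 Q_bound). fold Tr L in Rt.
    assert (Ft := Fterm q th T hq hth hqth HT3). fold Tr L in Ft.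
    set (W := sumR (T - 1) (fun i => let k := S i in
       / INR (k + 1) * (/ INR k * sumR k (fun j => 2 * etaM (T - k + 1 + j)%nat) - 2 * etaM (T - k)%nat)
       * (EM (fM (T - k)%nat) - es))) in *.
    set (SQ := sumR T (fun j => QM (1 + j)%nat)) in *.
    set (DQ := sumR (T - 1) (fun i => / (INR (S i) * INR (S i + 1)) * sumR (S i + 1) (fun j => QM (T - S i + j)%nat))) in *.
    set (c := Rpower Tr th / (2 * eta1)).
    assert (HTt : 0 < Rpower Tr th) by apply Rpower_pos.
    assert (Hc : 0 < c) by (unfold c; apply Rmult_lt_0_compat; [lra| apply Rinv_0_lt_compat; lra]).
    assert (Eca : c * (2 * etaM T) = 1).
    { unfold c, etaM. fold Tr. replace (Rpower Tr th / (2 * eta1) * (2 * (eta1 * Rpower Tr (- th)))) with (Rpower Tr th * Rpower Tr (- th)) by (field; lra).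
      apply Rpower_opp_mul. lra. }
    assert (M := Rmult_le_compat_l c _ _ (Rlt_le _ _ Hc) tel).
    replace (c * (2 * etaM T * (EM (fM T) - es))) with (c * (2 * etaM T) * (EM (fM T) - es)) in M by ring.
    rewrite Eca, Rmult_1_l in M.
    assert (EA1 : Rpower Tr th / Tr = Rpower Tr (- (1 - th))) by (rewrite Rpower_div_T by lra; f_equal; ring).
    assert (P1 : c * ((F + SQ) / Tr) + c * DQ = F / (2 * eta1) * (Rpower Tr th / Tr) + / (2 * eta1) * (Rpower Tr th * (SQ / Tr + DQ))).
    { unfold c. field. lra. }
    rewrite EA1 in P1.
    assert (P2 : F / (2 * eta1) * Rpower Tr (- (1 - th)) <= F / (2 * eta1) * L).
    { apply Rmult_le_compat_l; [apply Rmult_le_pos; [lra| left; apply Rinv_0_lt_compat; lra]| auto]. }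
    assert (P3 : / (2 * eta1) * (Rpower Tr th * (SQ / Tr + DQ)) <= C1 * L).
    { apply Rle_trans with (/ (2 * eta1) * (C2 * Kc q th * L)).
      { apply Rmult_le_compat_l; [left; apply Rinv_0_lt_compat; lra| auto]. }
      unfold C1, C1c. fold C2.
      assert (A := Rmax_r 0 (C2 * Kc q th / (2 * eta1))).
      assert (B := Rmax_l 0 ((3 * (1 - th) / (8 * eta1) + 2 * C2 / eta1) / LambdaT q th 2)).
      replace (/ (2 * eta1) * (C2 * Kc q th * L)) with (C2 * Kc q th / (2 * eta1) * L) by (field; lra).
      assert (C2 * Kc q th / (2 * eta1) * L <= Rmax 0 (C2 * Kc q th / (2 * eta1)) * L) by (apply Rmult_le_compat_r; lra).
      assert (0 <= (1 + Rmax 0 ((3 * (1 - th) / (8 * eta1) + 2 * C2 / eta1) / LambdaT q th 2)) * L) by (apply Rmult_le_pos; lra).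
      nra. }
    assert (Expand : (F / (2 * eta1) + cth * es + C1) * L = F / (2 * eta1) * L + cth * es * L + C1 * L) by ring.
    rewrite Expand.
    assert (M2 : c * ((F + SQ) / Tr + DQ + W) = c * ((F + SQ) / Tr) + c * DQ + c * W) by ring.
    rewrite M2 in M. fold c. lra.
Qed.

End Main.

Theorem mainTheorem11 :
  exists C1 : R -> R -> R -> R -> R -> R,
  forall (q kappa theta eta1 cq : R),
    0 < C1 q kappa theta eta1 cq /\
    forall (X : Type) (H : InnerSpace) (Kx : X -> H) (K : X -> X -> R)
      (Y : R -> Prop) (V Vd : R -> R -> R) (V0 : R)
      (m : nat) (xs : nat -> X) (ys : nat -> R) (fstar : H) (T : nat)
      (Mth : R),
    (* reproducing kernel K with feature map x |-> K_x *)
    (forall x x', K x x' = inner (Kx x) (Kx x')) ->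
    (* loss: nonnegative, convex in 2nd argument, Vd = left derivative *)
    (forall y a, 0 <= V y a) ->
    (forall y a b l, 0 <= l <= 1 ->
       V y (l * a + (1 - l) * b) <= l * V y a + (1 - l) * V y b) ->
    (forall y a, is_left_deriv (V y) a (Vd y a)) ->
    (* sample z = {(x_i, y_i)}_{i<m} in X x Y *)
    (1 <= m)%nat ->
    (forall i, (i < m)%nat -> Y (ys i)) ->
    (* (A1) *)
    is_lub (fun r => exists x : X, r = sqrt (K x x)) kappa ->
    is_lub (fun r => exists y, Y y /\ r = V y 0) V0 ->
    0 <= q -> 0 < cq ->
    (forall y a, Y y -> Rabs (Vd y a) <= cq * (1 + powr (Rabs a) q)) ->
    (* theta *)
    0 < theta < 1 -> q / (q + 1) < theta ->
    (* (R1) *)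
    0 < eta1 ->
    eta1 <= sqrt (1 - theta) / (sqrt 2 * cq * Rpower (kappa + 1) (q + 1)) ->
    4 * V0 * eta1 <= 1 - theta ->
    (* Mth = max_{t in N, t >= 1} (2 + log 4)(1 + log t) t^{-theta} *)
    (exists t, (1 <= t)%nat /\ Mth = cth_fun theta t) ->
    (forall t, (1 <= t)%nat -> cth_fun theta t <= Mth) ->
    (2 <= T)%nat ->
    let eta := fun t : nat => eta1 * Rpower (INR t) (- theta) in
    let f := gd Kx Vd m xs ys eta in
    let E := emp_risk Kx V m xs ys in
    let cth := / (1 - theta) * (1 + Mth) in
    E (f T) - E fstar <=
      (inner fstar fstar / (2 * eta1) + cth * E fstar + C1 q kappa theta eta1 cq)
        * LambdaT q theta T
      + Rpower (INR T) theta / (2 * eta1) *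
        sumR (T - 1) (fun i =>
          let k := S i in
          / INR (k + 1) *
            (/ INR k * sumR k (fun j => 2 * eta (T - k + 1 + j)%nat) - 2 * eta (T - k)%nat)
          * (E (f (T - k)%nat) - E fstar)).
Proof.
  exists C1c. intros q kappa theta eta1 cq. split. apply C1c_pos.
  intros X H Kx K Y V Vd V0 m xs ys fstar T Mth HK HVnn Hconv Hld Hm HY Hkap HV0 hq hcq Hgrow hth hqth he1 R1a R1b HM1 HM2 HT.
  intros eta f E cth.
  exact (main_bound X H Kx K Y V Vd V0 m xs ys q kappa theta eta1 cq HK HVnn Hconv Hld Hm HY Hkap HV0 hq hcq Hgrow hth hqth he1 R1a R1b fstar T Mth HM1 HT).
Qed.
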